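(* Let $x^*\in\Delta$ be a strict Nash equilibrium. Then $x^*$ is an attracting mutation limit point: $\{x^*\}$ is a mutation limit, and for every $c\in\operatorname{int}\Delta$ and every sequence of mutation equilibria $(x_n)$ for $c$ (with rates $M_n>0$, $M_n\to 0$) converging to $x^*$, there is $m>0$ such that $x_n$ is an asymptotically stable equilibrium of $\dot x=\phi^{M_n}(x)$ whenever $M_n<m$.
   Context: Let $I=\{1,\dots,N\}$ be a finite set of populations; population $i$ has the finite type set $S_i=\{1,\dots,n_i\}$. Let $S=\{(i,h): i\in I, h\in S_i\}$, $\Delta_i=\{x_i\in\mathbb R^{n_i}_{\ge 0}:\sum_{h\le n_i}x_{ih}=1\}$, $\Delta=\prod_{i\in I}\Delta_i\subset\mathbb R^S$, and $\operatorname{int}\Delta=\{x\in\Delta: x_{ih}>0 \text{ for all }(i,h)\in S\}$. For each $(i,h)\in S$ let $f_{ih}\in C^1(U,\mathbb R)$ for some open $U\supset\Delta$, with $\partial f_{ih}/\partial x_{ik}=0$ for all $i\in I$, $h,k\in S_i$. Put $\bar f_i(x)=\sum_{h\le n_i}x_{ih}f_{ih}(x)$, $g_{ih}=f_{ih}-\bar f_i$, and for $M\ge0$, $c\in\operatorname{int}\Delta$, $\phi^M_{ih}(x)=x_{ih}g_{ih}(x)+M(c_{ih}-x_{ih})$ (replicator–mutator dynamics; stability refers to its flow on $\Delta$). A strict Nash equilibrium is $x^*\in\Delta$ such that for all $i\in I$ and all $z_i\in\Delta_i\setminus\{x_i^*\}$, $\bar f_i(x^* )>\bar f_i(x^*_{-i},z_i)$,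 where $(x^*_{-i},z_i)$ is $x^*$ with its $i$-th component replaced by $z_i$. A mutation equilibrium for $M$ (w.r.t. $c$) is $x\in\Delta$ with $\phi^M(x)=0$; a sequence of mutation equilibria for $c$ is $(x_n)\subset\Delta$ with $M_n>0$, $M_n\to0$, $\phi^{M_n}(x_n)=0$. A mutation limit is a nonempty connected compact set $X\subset\Delta$ such that for every $c\in\operatorname{int}\Delta$ there is a sequence of mutation equilibria for $c$ converging to an element of $X$, and no proper subset of $X$ is a connected compact set with this property. A mutation limit $X$ is attracting if for every $c\in\operatorname{int}\Delta$ and every sequence of mutation equilibria for $c$ converging to an element of $X$, there is $m>0$ such that all terms with rate $M_n<m$ are asymptotically stable. *)

(* Defs.v *)
From Stdlib Require Import Reals Lra Lia Arith List.
Open Scope R_scope.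

(* Points of R^S are represented as functions x : nat -> nat -> R, where
   x i h is the coordinate (i,h); populations are indexed 0 <= i < N and
   types of population i by 0 <= h < n i. Coordinates outside S are junk;
   all distances only look at coordinates in S, and membership in Delta
   requires junk coordinates to be 0 (so points of Delta are canonical). *)
Definition pt := nat -> nat -> R.

Fixpoint rsum (k : nat) (F : nat -> R) : R :=
  match k with O => 0 | S k' => rsum k' F + F k' end.

Definition inS (N : nat) (n : nat -> nat) (i h : nat) : Prop :=
  (i < N)%nat /\ (h < n i)%nat.

Definition dist (N : nat) (n : nat -> nat) (x y : pt) : R :=
  rsum N (fun i => rsum (n i) (fun h => Rabs (x i h - y i h))).

Definition in_Delta_i (n : nat -> nat) (i : nat) (z : nat -> R) : Prop :=
  (forall h, (h < n i)%nat -> 0 <= z h) /\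
  (forall h, (n i <= h)%nat -> z h = 0) /\
  rsum (n i) z = 1.

Definition in_Delta (N : nat) (n : nat -> nat) (x : pt) : Prop :=
  (forall i, (i < N)%nat -> in_Delta_i n i (x i)) /\
  (forall i h, (N <= i)%nat -> x i h = 0).

Definition in_int_Delta (N : nat) (n : nat -> nat) (x : pt) : Prop :=
  in_Delta N n x /\ (forall i h, inS N n i h -> 0 < x i h).

Definition is_open (N : nat) (n : nat -> nat) (U : pt -> Prop) : Prop :=
  forall x, U x -> exists eps, 0 < eps /\ forall y, dist N n y x < eps -> U y.

Definition is_compact (N : nat) (n : nat -> nat) (X : pt -> Prop) : Prop :=
  forall F : (pt -> Prop) -> Prop,
    (forall U, F U -> is_open N n U) ->
    (forall x, X x -> exists U, F U /\ U x) ->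
    exists l : list (pt -> Prop),
      (forall U, In U l -> F U) /\ (forall x, X x -> exists U, In U l /\ U x).

Definition is_connected (N : nat) (n : nat -> nat) (X : pt -> Prop) : Prop :=
  ~ exists U V : pt -> Prop,
      is_open N n U /\ is_open N n V /\
      (forall x, X x -> U x \/ V x) /\
      (exists x, X x /\ U x) /\ (exists x, X x /\ V x) /\
      (forall x, X x -> U x -> V x -> False).

(* f is C^1 on the open set U (Frechet differentiable with continuous
   derivative Df), with Df x j k the partial derivative w.r.t. x_{jk}. *)
Definition C1_on (N : nat) (n : nat -> nat) (U : pt -> Prop) (g : pt -> R)
    (Dg : pt -> nat -> nat -> R) : Prop :=
  (forall x, U x -> forall eps, 0 < eps -> exists d, 0 < d /\
     forall y, dist N n y x < d ->
       Rabs (g y - g x - rsum N (fun j => rsum (n j)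
               (fun k => Dg x j k * (y j k - x j k))))
       <= eps * dist N n y x) /\
  (forall x, U x -> forall j k, inS N n j k -> forall eps, 0 < eps ->
     exists d, 0 < d /\ forall y, U y -> dist N n y x < d ->
       Rabs (Dg y j k - Dg x j k) < eps).

(* Standing assumptions on the fitness functions f_{ih}: C^1 on some open
   U containing Delta, with df_{ih}/dx_{ik} = 0. *)
Definition fitness_hyp (N : nat) (n : nat -> nat) (f : nat -> nat -> pt -> R)
  : Prop :=
  exists U : pt -> Prop,
    is_open N n U /\ (forall x, in_Delta N n x -> U x) /\
    forall i h, inS N n i h ->
      exists Df : pt -> nat -> nat -> R,
        C1_on N n U (f i h) Df /\
        (forall x k, U x -> (k < n i)%nat -> Df x i k = 0).

Definition fbar (n : nat -> nat) (f : nat -> nat -> pt -> R) (i : nat) (x : pt)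
  : R := rsum (n i) (fun h => x i h * f i h x).

Definition g_fit (n : nat -> nat) (f : nat -> nat -> pt -> R) (i h : nat)
  (x : pt) : R := f i h x - fbar n f i x.

Definition phi (n : nat -> nat) (f : nat -> nat -> pt -> R) (M : R) (c : pt)
  (x : pt) : pt :=
  fun i h => x i h * g_fit n f i h x + M * (c i h - x i h).

Definition replace_i (x : pt) (i : nat) (z : nat -> R) : pt :=
  fun j => if Nat.eqb j i then z else x j.

Definition strict_nash (N : nat) (n : nat -> nat) (f : nat -> nat -> pt -> R)
  (xs : pt) : Prop :=
  in_Delta N n xs /\
  forall i, (i < N)%nat -> forall z, in_Delta_i n i z -> z <> xs i ->
    fbar n f i xs > fbar n f i (replace_i xs i z).

Definition seq_cv (N : nat) (n : nat -> nat) (x : nat -> pt) (y : pt) : Prop :=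
  forall eps, 0 < eps -> exists K, forall k, (K <= k)%nat ->
    dist N n (x k) y < eps.

Definition mut_eq_seq (N : nat) (n : nat -> nat) (f : nat -> nat -> pt -> R)
  (c : pt) (M : nat -> R) (x : nat -> pt) : Prop :=
  (forall k, 0 < M k) /\ Un_cv M 0 /\
  (forall k, in_Delta N n (x k)) /\
  (forall k i h, inS N n i h -> phi n f (M k) c (x k) i h = 0).

Definition has_mut_property (N : nat) (n : nat -> nat)
  (f : nat -> nat -> pt -> R) (X : pt -> Prop) : Prop :=
  forall c, in_int_Delta N n c ->
    exists (M : nat -> R) (x : nat -> pt) (y : pt),
      mut_eq_seq N n f c M x /\ X y /\ seq_cv N n x y.

Definition mutation_limit (N : nat) (n : nat -> nat)
  (f : nat -> nat -> pt -> R) (X : pt -> Prop) : Prop :=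
  (exists x, X x) /\ (forall x, X x -> in_Delta N n x) /\
  is_connected N n X /\ is_compact N n X /\
  has_mut_property N n f X /\
  forall Y : pt -> Prop,
    (forall x, Y x -> X x) -> (exists x, X x /\ ~ Y x) ->
    is_connected N n Y -> is_compact N n Y ->
    ~ has_mut_property N n f Y.

Definition solution_in_Delta (N : nat) (n : nat -> nat) (F : pt -> pt)
  (z : R -> pt) : Prop :=
  (forall t, 0 <= t -> in_Delta N n (z t)) /\
  (forall t, 0 < t -> forall i h, inS N n i h ->
     derivable_pt_lim (fun s => z s i h) t (F (z t) i h)) /\
  (forall eps, 0 < eps -> exists d, 0 < d /\
     forall t, 0 <= t < d -> dist N n (z t) (z 0) < eps).

Definition asympt_stable (N : nat) (n : nat -> nat) (F : pt -> pt) (e : pt)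
  : Prop :=
  (forall eps, 0 < eps -> exists d, 0 < d /\
     forall z, solution_in_Delta N n F z -> dist N n (z 0) e < d ->
       forall t, 0 <= t -> dist N n (z t) e < eps) /\
  (exists eta, 0 < eta /\
     forall z, solution_in_Delta N n F z -> dist N n (z 0) e < eta ->
       forall eps, 0 < eps -> exists T, forall t, T <= t ->
         dist N n (z t) e < eps).

Definition attracting (N : nat) (n : nat -> nat) (f : nat -> nat -> pt -> R)
  (X : pt -> Prop) : Prop :=
  forall c, in_int_Delta N n c ->
    forall (M : nat -> R) (x : nat -> pt),
      mut_eq_seq N n f c M x ->
      (exists y, X y /\ seq_cv N n x y) ->
      exists m, 0 < m /\ forall k, M k < m ->
        asympt_stable N n (phi n f (M k) c) (x k).

(* Main.v *)
Require Import Defs.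
From Stdlib Require Import Reals Lra Lia Arith List FunctionalExtensionality Classical IndefiniteDescription.
Import Defs.
Open Scope R_scope.

Lemma rsum_ext m F G : (forall k, (k < m)%nat -> F k = G k) -> rsum m F = rsum m G.
Proof. induction m; simpl; intros H; auto. rewrite IHm by (intros; apply H; lia). rewrite H by lia; auto. Qed.

Lemma rsum_plus m F G : rsum m (fun k => F k + G k) = rsum m F + rsum m G.
Proof. induction m; simpl; [lra|rewrite IHm; lra]. Qed.
Lemma rsum_minus m F G : rsum m (fun k => F k - G k) = rsum m F - rsum m G.
Proof. induction m; simpl; [lra|rewrite IHm; lra]. Qed.
Lemma rsum_scal m a F : rsum m (fun k => a * F k) = a * rsum m F.
Proof. induction m; simpl; [lra|rewrite IHm; lra]. Qed.
Lemma rsum_const m a : rsum m (fun _ => a) = INR m * a.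
Proof. induction m; simpl rsum; [simpl; lra|rewrite IHm, S_INR; lra]. Qed.
Lemma rsum_le m F G : (forall k, (k < m)%nat -> F k <= G k) -> rsum m F <= rsum m G.
Proof. induction m; simpl; intros H; [lra|]. assert (F m <= G m) by (apply H; lia).
  assert (rsum m F <= rsum m G) by (apply IHm; intros; apply H; lia). lra. Qed.
Lemma rsum_nonneg m F : (forall k, (k < m)%nat -> 0 <= F k) -> 0 <= rsum m F.
Proof. intros H. replace 0 with (rsum m (fun _ => 0)). apply rsum_le; auto.
  rewrite rsum_const; lra. Qed.
Lemma rsum_abs m F : Rabs (rsum m F) <= rsum m (fun k => Rabs (F k)).
Proof. induction m; simpl. rewrite Rabs_R0; lra.
  eapply Rle_trans. apply Rabs_triang. lra. Qed.
Lemma rsum_term_le m F k : (forall k, (k < m)%nat -> 0 <= F k) -> (k < m)%nat -> F k <= rsum m F.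
Proof. induction m; intros H Hk; [lia|simpl].
  destruct (Nat.eq_dec k m).
  - subst. assert (0 <= rsum m F) by (apply rsum_nonneg; intros; apply H; lia). lra.
  - assert (F k <= rsum m F) by (apply IHm; [intros; apply H|]; lia).
    assert (0 <= F m) by (apply H; lia). lra. Qed.
Lemma rsum_split m F b : (b < m)%nat ->
  rsum m F = F b + rsum m (fun k => if Nat.eqb k b then 0 else F k).
Proof. induction m; intros Hb; [lia|simpl].
  destruct (Nat.eq_dec b m).
  - subst. rewrite Nat.eqb_refl.
    rewrite (rsum_ext m (fun k => if Nat.eqb k m then 0 else F k) F). lra.
    intros k Hk. destruct (Nat.eqb_spec k m); [lia|auto].
  - rewrite IHm by lia. destruct (Nat.eqb_spec m b); [lia|]. lra. Qed.
Lemma rsum_delta m b a : (b < m)%nat -> rsum m (fun k => if Nat.eqb k b then a else 0) = a.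
Proof. intros Hb. rewrite (rsum_split _ _ b Hb). rewrite Nat.eqb_refl.
  rewrite (rsum_ext _ _ (fun _ => 0)). rewrite rsum_const; lra.
  intros k _. destruct (Nat.eqb k b); auto. Qed.

Lemma rsum_cs m F : (rsum m F)^2 <= INR m * rsum m (fun k => F k ^ 2).
Proof. induction m; simpl rsum. simpl; lra.
  rewrite S_INR.
  assert (2 * rsum m F * F m <= rsum m (fun k => F k ^ 2) + INR m * F m ^ 2).
  { replace (2 * rsum m F * F m) with (rsum m (fun k => 2 * F k * F m)).
    2:{ rewrite (rsum_ext m (fun k => 2 * F k * F m) (fun k => (2 * F m) * F k)) by (intros; ring).
        rewrite rsum_scal. ring. }
    rewrite <- (rsum_const m (F m ^ 2)). rewrite <- rsum_plus. apply rsum_le. intros k _. pose proof (pow2_ge_0 (F k - F m)). simpl in *; nra. }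
  set (S0 := rsum m F) in *. set (Q0 := rsum m (fun k => F k ^ 2)) in *.
  set (a := F m) in *. set (mm := INR m) in *. simpl in *. fold Q0. nra. Qed.

Definition sumS (N : nat) (n : nat -> nat) (G : nat -> nat -> R) : R :=
  rsum N (fun i => rsum (n i) (fun h => G i h)).

Lemma sumS_ext N n G H : (forall i h, inS N n i h -> G i h = H i h) -> sumS N n G = sumS N n H.
Proof. intros E; unfold sumS; apply rsum_ext; intros i Hi; apply rsum_ext; intros h Hh; apply E; split; auto. Qed.
Lemma sumS_plus N n G H : sumS N n (fun i h => G i h + H i h) = sumS N n G + sumS N n H.
Proof. unfold sumS. rewrite <- rsum_plus. apply rsum_ext; intros; apply rsum_plus. Qed.
Lemma sumS_minus N n G H : sumS N n (fun i h => G i h - H i h) = sumS N n G - sumS N n H.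
Proof. unfold sumS. rewrite <- rsum_minus. apply rsum_ext; intros; apply rsum_minus. Qed.
Lemma sumS_scal N n a G : sumS N n (fun i h => a * G i h) = a * sumS N n G.
Proof. unfold sumS. rewrite <- rsum_scal. apply rsum_ext; intros; apply rsum_scal. Qed.
Lemma sumS_le N n G H : (forall i h, inS N n i h -> G i h <= H i h) -> sumS N n G <= sumS N n H.
Proof. intros E; unfold sumS; apply rsum_le; intros i Hi; apply rsum_le; intros h Hh; apply E; split; auto. Qed.
Lemma sumS_nonneg N n G : (forall i h, inS N n i h -> 0 <= G i h) -> 0 <= sumS N n G.
Proof. intros E; unfold sumS; apply rsum_nonneg; intros i Hi; apply rsum_nonneg; intros h Hh; apply E; split; auto. Qed.
Lemma sumS_abs N n G : Rabs (sumS N n G) <= sumS N n (fun i h => Rabs (G i h)).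
Proof. unfold sumS. eapply Rle_trans. apply rsum_abs. apply rsum_le. intros; apply rsum_abs. Qed.
Lemma sumS_term_le N n G i h : (forall i h, inS N n i h -> 0 <= G i h) -> inS N n i h -> G i h <= sumS N n G.
Proof. intros E [Hi Hh]. unfold sumS. eapply Rle_trans.
  2: apply (rsum_term_le N (fun i => rsum (n i) (fun h => G i h)) i); auto.
  apply (rsum_term_le (n i) (fun h => G i h) h); auto. intros; apply E; split; auto.
  intros; apply rsum_nonneg; intros; apply E; split; auto. Qed.

Definition cnt N n := sumS N n (fun _ _ => 1).
Lemma cnt_nonneg N n : 0 <= cnt N n.
Proof. apply sumS_nonneg; intros; lra. Qed.
Lemma sumS_bound N n G B : (forall i h, inS N n i h -> G i h <= B) -> sumS N n G <= cnt N n * B.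
Proof. intros E. unfold cnt. rewrite Rmult_comm, <- sumS_scal. apply sumS_le. intros; rewrite Rmult_1_r; auto. Qed.

Definition Kc N n := INR N * rsum N (fun i => INR (n i)).
Lemma Kc_nonneg N n : 0 <= Kc N n.
Proof. unfold Kc. apply Rmult_le_pos. apply pos_INR. apply rsum_nonneg; intros; apply pos_INR. Qed.

Lemma sumS_cs N n G : (sumS N n G)^2 <= Kc N n * sumS N n (fun i h => G i h ^ 2).
Proof. unfold sumS, Kc. eapply Rle_trans. apply rsum_cs.
  rewrite Rmult_assoc. apply Rmult_le_compat_l. apply pos_INR.
  rewrite <- rsum_scal. apply rsum_le. intros i Hi.
  eapply Rle_trans. apply rsum_cs. apply Rmult_le_compat_r.
  apply rsum_nonneg; intros; apply pow2_ge_0.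
  apply (rsum_term_le N (fun i => INR (n i))); auto. intros; apply pos_INR. Qed.

Lemma geom_small a C : (forall m, a <= C * (/2)^m) -> a <= 0.
Proof. intros H. destruct (Rle_dec a 0); auto. exfalso.
  assert (HC : 0 < C). { specialize (H O). simpl in H. lra. }
  destruct (pow_lt_1_zero (/2) ltac:(rewrite Rabs_pos_eq; lra) (a / C)) as [K HK].
  apply Rdiv_lt_0_compat; lra.
  specialize (HK K (le_n _)). specialize (H K).
  rewrite Rabs_pos_eq in HK by (apply pow_le; lra).
  apply Rmult_lt_compat_l with (r := C) in HK; auto.
  replace (C * (a / C)) with a in HK by (field; lra). lra. Qed.

Lemma dist_eq N n x y : dist N n x y = sumS N n (fun i h => Rabs (x i h - y i h)).
Proof. reflexivity. Qed.
Lemma dist_nonneg N n x y : 0 <= dist N n x y.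
Proof. apply sumS_nonneg; intros; apply Rabs_pos. Qed.
Lemma dist_sym N n x y : dist N n x y = dist N n y x.
Proof. unfold dist. apply rsum_ext; intros; apply rsum_ext; intros. apply Rabs_minus_sym. Qed.
Lemma dist_tri N n x y z : dist N n x z <= dist N n x y + dist N n y z.
Proof. rewrite !dist_eq, <- sumS_plus. apply sumS_le; intros.
  replace (x i h - z i h) with ((x i h - y i h) + (y i h - z i h)) by ring. apply Rabs_triang. Qed.
Lemma coord_le_dist N n x y i h : inS N n i h -> Rabs (x i h - y i h) <= dist N n x y.
Proof. intros H. rewrite dist_eq. apply (sumS_term_le N n (fun i h => Rabs (x i h - y i h))); auto.
  intros; apply Rabs_pos. Qed.
Lemma rowsum_le_dist N n x y i : (i < N)%nat ->
  rsum (n i) (fun h => Rabs (x i h - y i h)) <= dist N n x y.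
Proof. intros Hi. unfold dist. apply (rsum_term_le N (fun i => rsum (n i) (fun h => Rabs (x i h - y i h)))); auto.
  intros; apply rsum_nonneg; intros; apply Rabs_pos. Qed.

Lemma Delta_coord N n x i h : in_Delta N n x -> inS N n i h -> 0 <= x i h <= 1.
Proof. intros [HD _] [Hi Hh]. destruct (HD i Hi) as [Hp [_ Hs]]. split; auto.
  rewrite <- Hs. apply (rsum_term_le (n i) (x i) h); auto. Qed.
Lemma Delta_junk N n x i h : in_Delta N n x -> ~ inS N n i h -> x i h = 0.
Proof. intros [HD HJ] H. destruct (Nat.lt_ge_cases i N) as [Hi|Hi]; [|apply HJ; auto].
  destruct (HD i Hi) as [_ [Hz _]]. apply Hz. destruct (Nat.lt_ge_cases h (n i)); auto.
  exfalso; apply H; split; auto. Qed.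
Lemma coord_le_dist_D N n x y i h : in_Delta N n x -> in_Delta N n y ->
  Rabs (x i h - y i h) <= dist N n x y.
Proof. intros Hx Hy. destruct (classic (inS N n i h)) as [H|H]. apply coord_le_dist; auto.
  rewrite (Delta_junk N n x i h), (Delta_junk N n y i h); auto.
  rewrite Rminus_0_r, Rabs_R0. apply dist_nonneg. Qed.
Lemma dist_zero_eq N n x y i h : dist N n x y <= 0 -> inS N n i h -> x i h = y i h.
Proof. intros H Hs. pose proof (coord_le_dist N n x y i h Hs). pose proof (Rabs_pos (x i h - y i h)).
  destruct (Rcase_abs (x i h - y i h)); [rewrite Rabs_left in *|rewrite Rabs_right in *]; lra. Qed.

Definition vertex N n (e : pt) (b : nat -> nat) : Prop :=
  in_Delta N n e /\ (forall i, (i < N)%nat -> (b i < n i)%nat) /\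
  forall i h, inS N n i h -> e i h = if Nat.eqb h (b i) then 1 else 0.

Definition off (b : nat -> nat) (G : nat -> nat -> R) : nat -> nat -> R :=
  fun i h => if Nat.eqb h (b i) then 0 else G i h.

Lemma off_nonneg N n b G : (forall i h, inS N n i h -> 0 <= G i h) -> 0 <= sumS N n (off b G).
Proof. intros H; apply sumS_nonneg; intros i h Hs; unfold off; destruct (Nat.eqb h (b i)); [lra|auto]. Qed.
Lemma off_le N n b G : (forall i h, inS N n i h -> 0 <= G i h) -> sumS N n (off b G) <= sumS N n G.
Proof. intros H; apply sumS_le; intros i h Hs; unfold off; destruct (Nat.eqb h (b i)); [apply H; auto|lra]. Qed.

Lemma row_split N n b x i : (i < N)%nat -> (b i < n i)%nat -> in_Delta N n x ->
  x i (b i) = 1 - rsum (n i) (fun h => if Nat.eqb h (b i) then 0 else x i h).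
Proof. intros Hi Hb [HD _]. destruct (HD i Hi) as [_ [_ Hs]].
  rewrite (rsum_split _ _ _ Hb) in Hs. lra. Qed.

Lemma dist_e N n e b x : vertex N n e b -> in_Delta N n x ->
  dist N n x e = 2 * sumS N n (off b x).
Proof. intros [He [Hb Hv]] Hx. unfold dist, sumS. rewrite <- rsum_scal. apply rsum_ext; intros i Hi.
  rewrite (rsum_split _ _ (b i) (Hb i Hi)). cbv beta.
  rewrite (row_split N n b x i Hi (Hb i Hi) Hx).
  rewrite Hv by (split; auto; apply Hb; auto). rewrite Nat.eqb_refl.
  unfold off.
  rewrite (rsum_ext _ (fun k => if Nat.eqb k (b i) then 0 else Rabs (x i k - e i k)) (fun h => if Nat.eqb h (b i) then 0 else x i h)).
  2:{ intros h Hh. rewrite Hv by (split; auto). destruct (Nat.eqb h (b i)); auto.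
      rewrite Rminus_0_r. apply Rabs_pos_eq. apply (Delta_coord N n x i h Hx). split; auto. }
  set (s := rsum _ _). replace (1 - s - 1) with (- s) by ring. rewrite Rabs_Ropp.
  rewrite Rabs_pos_eq. lra. apply rsum_nonneg. intros h Hh. destruct (Nat.eqb h (b i)); [lra|].
  apply (Delta_coord N n x i h Hx); split; auto. Qed.

Lemma dist_off N n e b x y : vertex N n e b -> in_Delta N n x -> in_Delta N n y ->
  dist N n x y <= 2 * sumS N n (off b (fun i h => Rabs (x i h - y i h))).
Proof. intros [He [Hb Hv]] Hx Hy. unfold dist, sumS. rewrite <- rsum_scal. apply rsum_le; intros i Hi.
  rewrite (rsum_split _ _ (b i) (Hb i Hi)). cbv beta. unfold off.
  rewrite (row_split N n b x i Hi (Hb i Hi) Hx), (row_split N n b y i Hi (Hb i Hi) Hy).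
  set (A := rsum (n i) (fun h => if Nat.eqb h (b i) then 0 else Rabs (x i h - y i h))).
  assert (Rabs (1 - rsum (n i) (fun h => if Nat.eqb h (b i) then 0 else x i h) -
     (1 - rsum (n i) (fun h => if Nat.eqb h (b i) then 0 else y i h))) <= A).
  { rewrite <- Rabs_Ropp. replace (- _) with (rsum (n i) (fun h => (if Nat.eqb h (b i) then 0 else x i h) - (if Nat.eqb h (b i) then 0 else y i h))).
    2:{ rewrite rsum_minus. ring. }
    eapply Rle_trans. apply rsum_abs. apply rsum_le. intros h _. destruct (Nat.eqb h (b i)); [|lra].
    rewrite Rminus_0_r, Rabs_R0; lra. }
  lra. Qed.

Definition seg (x y : pt) (t : R) : pt := fun j k => x j k + t * (y j k - x j k).

Lemma seg_ball N n x y e t rho : 0 <= t <= 1 -> dist N n x e < rho -> dist N n y e < rho ->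
  dist N n (seg x y t) e < rho.
Proof. intros Ht Hx Hy. apply Rle_lt_trans with ((1 - t) * dist N n x e + t * dist N n y e).
  2:{ assert (t * dist N n y e <= t * rho) by (apply Rmult_le_compat_l; lra).
      destruct (Rlt_or_le t 1). assert ((1-t) * dist N n x e < (1-t) * rho) by (apply Rmult_lt_compat_l; lra). lra.
      assert (t = 1) by lra. subst. lra. }
  rewrite !dist_eq, <- !sumS_scal, <- sumS_plus. apply sumS_le; intros i h _. unfold seg.
  replace (x i h + t * (y i h - x i h) - e i h) with ((1-t) * (x i h - e i h) + t * (y i h - e i h)) by ring.
  eapply Rle_trans. apply Rabs_triang. rewrite !Rabs_mult, (Rabs_pos_eq (1-t)), (Rabs_pos_eq t) by lra. lra. Qed.

Lemma seg_Delta N n x y t : 0 <= t <= 1 -> in_Delta N n x -> in_Delta N n y -> in_Delta N n (seg x y t).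
Proof. intros Ht [HDx HJx] [HDy HJy]. split.
  - intros i Hi. destruct (HDx i Hi) as [P1 [Z1 S1]]. destruct (HDy i Hi) as [P2 [Z2 S2]].
    split; [|split]; unfold seg.
    + intros h Hh. specialize (P1 h Hh). specialize (P2 h Hh). nra.
    + intros h Hh. rewrite Z1, Z2 by auto. ring.
    + rewrite rsum_plus, rsum_scal, rsum_minus. rewrite S1, S2. ring.
  - intros i h Hi. unfold seg. rewrite HJx, HJy by auto. ring. Qed.

Lemma seg_1 x y : seg x y 1 = y.
Proof. apply functional_extensionality; intro j; apply functional_extensionality; intro k. unfold seg; ring. Qed.
Lemma seg_0 x y : seg x y 0 = x.
Proof. apply functional_extensionality; intro j; apply functional_extensionality; intro k. unfold seg; ring. Qed.

Lemma segment_mvt N n U g Dg x y : C1_on N n U g Dg ->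
  (forall t, 0 <= t <= 1 -> U (seg x y t)) ->
  exists c, 0 < c < 1 /\
    g y - g x = sumS N n (fun j k => Dg (seg x y c) j k * (y j k - x j k)).
Proof.
  intros [HF _] HU.
  set (phi := fun t => g (seg x y t)).
  set (dphi := fun t => sumS N n (fun j k => Dg (seg x y t) j k * (y j k - x j k))).
  assert (Hd : forall t, 0 <= t <= 1 -> derivable_pt_lim phi t (dphi t)).
  { intros t Ht eps Heps.
    set (D := dist N n y x). assert (HD : 0 <= D) by apply dist_nonneg.
    destruct (HF (seg x y t) (HU t Ht) (eps / (2 * (D + 1)))) as [d [Hd Hest]].
    { apply Rdiv_lt_0_compat; lra. }
    assert (Hdp : 0 < d / (D + 1)) by (apply Rdiv_lt_0_compat; lra).
    exists (mkposreal _ Hdp). intros h Hh0 Hh. simpl in Hh.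
    assert (Hdist : dist N n (seg x y (t + h)) (seg x y t) = Rabs h * D).
    { unfold D. rewrite !dist_eq, <- sumS_scal. apply sumS_ext; intros. unfold seg.
      rewrite <- Rabs_mult. f_equal. ring. }
    assert (Hlin : rsum N (fun j => rsum (n j) (fun k => Dg (seg x y t) j k * (seg x y (t + h) j k - seg x y t j k)))
                   = h * dphi t).
    { change (sumS N n (fun j k => Dg (seg x y t) j k * (seg x y (t + h) j k - seg x y t j k)) = h * dphi t). unfold dphi. rewrite <- sumS_scal. apply sumS_ext; intros. unfold seg. ring. }
    assert (Hlt : dist N n (seg x y (t + h)) (seg x y t) < d).
    { rewrite Hdist. assert (Rabs h * D <= Rabs h * (D + 1)) by (apply Rmult_le_compat_l; [apply Rabs_pos|lra]).
      apply Rmult_lt_compat_r with (r := D + 1) in Hh; [|lra].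
      unfold Rdiv in Hh. rewrite Rmult_assoc, Rinv_l, Rmult_1_r in Hh by lra. lra. }
    specialize (Hest _ Hlt). rewrite Hlin, Hdist in Hest.
    unfold phi.
    replace ((g (seg x y (t + h)) - g (seg x y t)) / h - dphi t)
      with ((g (seg x y (t + h)) - g (seg x y t) - h * dphi t) / h) by (field; auto).
    unfold Rdiv. rewrite Rabs_mult, Rabs_inv.
    assert (Hah : 0 < Rabs h) by (apply Rabs_pos_lt; auto).
    apply Rle_lt_trans with (eps / (2 * (D + 1)) * (Rabs h * D) * / Rabs h).
    { apply Rmult_le_compat_r; auto. left; apply Rinv_0_lt_compat; auto. }
    replace (eps / (2 * (D + 1)) * (Rabs h * D) * / Rabs h) with (eps * (D / (2 * (D + 1)))) by (field; lra).
    assert (D / (2 * (D + 1)) < 1).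
    { apply (Rmult_lt_reg_r (2 * (D + 1))). lra. unfold Rdiv. rewrite Rmult_assoc, Rinv_l by lra. lra. }
    nra. }
  destruct (MVT_cor2 phi dphi 0 1 ltac:(lra) Hd) as [c [Hc1 Hc2]].
  exists c. split; auto. unfold phi in Hc1. rewrite seg_1, seg_0 in Hc1. unfold dphi in Hc1. lra.
Qed.

Lemma fin_choice m (P : nat -> R -> R -> Prop) :
  (forall k r r' B B', P k r B -> 0 < r' <= r -> B <= B' -> P k r' B') ->
  (forall k, (k < m)%nat -> exists r B, 0 < r /\ P k r B) ->
  exists r B, 0 < r /\ forall k, (k < m)%nat -> P k r B.
Proof. intros Hm. induction m; intros H.
  - exists 1, 0. split; [lra|intros; lia].
  - destruct IHm as [r1 [B1 [Hr1 H1]]]. intros; apply H; lia.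
    destruct (H m ltac:(lia)) as [r2 [B2 [Hr2 H2]]].
    exists (Rmin r1 r2), (Rmax B1 B2). split. apply Rmin_pos; auto.
    intros k Hk. destruct (Nat.eq_dec k m).
    + subst. eapply Hm; eauto. split. apply Rmin_pos; auto. apply Rmin_r. apply Rmax_r.
    + eapply Hm. apply H1; lia. split. apply Rmin_pos; auto. apply Rmin_l. apply Rmax_l.
Qed.

Lemma finS_choice N n (P : nat -> nat -> R -> R -> Prop) :
  (forall i h r r' B B', P i h r B -> 0 < r' <= r -> B <= B' -> P i h r' B') ->
  (forall i h, inS N n i h -> exists r B, 0 < r /\ P i h r B) ->
  exists r B, 0 < r /\ forall i h, inS N n i h -> P i h r B.
Proof. intros Hm H.
  destruct (fin_choice N (fun i r B => forall h, (h < n i)%nat -> P i h r B)) as [r [B [Hr HP]]].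
  - intros; eauto.
  - intros i Hi. apply fin_choice. intros; eauto. intros h Hh. apply H; split; auto.
  - exists r, B; split; auto. intros i h [Hi Hh]; auto.
Qed.

Lemma f_lip N n f e : fitness_hyp N n f -> in_Delta N n e ->
  exists r B, 0 < r /\ forall i h, inS N n i h -> 0 <= B /\
    forall x y, dist N n x e < r -> dist N n y e < r ->
      Rabs (f i h x - f i h y) <= B * dist N n x y.
Proof.
  intros [U [HUo [HDU HD]]] He.
  destruct (HUo e (HDU e He)) as [r0 [Hr0 Hball]].
  apply finS_choice.
  { intros i h r r' B B' [HB HP] Hr HBB. split. lra. intros x y Hx Hy.
    eapply Rle_trans. apply HP; lra. apply Rmult_le_compat_r; auto. apply dist_nonneg. }
  intros i h Hs. destruct (HD i h Hs) as [Df [[HF HC] Hown]].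
  destruct (finS_choice N n (fun j k r _ => forall y, U y -> dist N n y e < r -> Rabs (Df y j k - Df e j k) < 1))
    as [d [_ [Hd Hcont]]].
  { intros j k r r' B B' H Hr _ y Uy Hy. apply H; auto. lra. }
  { intros j k Hjk. destruct (HC e (HDU e He) j k Hjk 1 ltac:(lra)) as [d [Hd H]].
    exists d, 0. split; [auto|]. intros y Uy Hy. apply H; auto. }
  set (Bm := sumS N n (fun j k => Rabs (Df e j k)) + 1).
  exists (Rmin r0 d), Bm. split. apply Rmin_pos; auto. split.
  { unfold Bm. pose proof (sumS_nonneg N n (fun j k => Rabs (Df e j k)) ltac:(intros; apply Rabs_pos)). lra. }
  intros x y Hx Hy.
  assert (Hseg : forall t, 0 <= t <= 1 -> dist N n (seg y x t) e < Rmin r0 d).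
  { intros t Ht. apply seg_ball; auto. }
  destruct (segment_mvt N n U (f i h) Df y x (conj HF HC)) as [c [Hc Heq]].
  { intros t Ht. apply Hball. specialize (Hseg t Ht). pose proof (Rmin_l r0 d). lra. }
  rewrite Heq. eapply Rle_trans. apply sumS_abs.
  rewrite dist_eq, <- sumS_scal. apply sumS_le. intros j k Hjk.
  rewrite Rabs_mult. rewrite (Rabs_minus_sym (x j k)). apply Rmult_le_compat_r. apply Rabs_pos.
  assert (Hp : dist N n (seg y x c) e < Rmin r0 d) by (apply Hseg; lra).
  assert (U (seg y x c)) by (apply Hball; pose proof (Rmin_l r0 d); lra).
  assert (Rabs (Df (seg y x c) j k - Df e j k) < 1) by (apply Hcont; auto; pose proof (Rmin_r r0 d); lra).
  assert (Rabs (Df e j k) <= sumS N n (fun j k => Rabs (Df e j k))).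
  { apply (sumS_term_le N n (fun j k => Rabs (Df e j k))); auto. intros; apply Rabs_pos. }
  unfold Bm. pose proof (Rabs_triang_inv (Df (seg y x c) j k) (Df e j k)). lra.
Qed.

Lemma f_own N n f i h x y : fitness_hyp N n f -> inS N n i h -> in_Delta N n x -> in_Delta N n y ->
  (forall j k, j <> i -> x j k = y j k) -> f i h x = f i h y.
Proof.
  intros [U [HUo [HDU HD]]] Hs Hx Hy Hxy.
  destruct (HD i h Hs) as [Df [HC Hown]].
  destruct (segment_mvt N n U (f i h) Df x y HC) as [c [Hc Heq]].
  { intros t Ht. apply HDU. apply seg_Delta; auto. }
  rewrite sumS_ext with (H := fun _ _ => 0) in Heq. unfold sumS in Heq.
  rewrite (rsum_ext N _ (fun _ => 0)) in Heq. rewrite rsum_const in Heq. lra.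
  intros; rewrite rsum_const; ring.
  intros j k [Hj Hk]. destruct (Nat.eq_dec j i).
  - subst. rewrite Hown. ring. apply HDU. apply seg_Delta; auto; lra. auto.
  - rewrite Hxy by auto. ring.
Qed.

Definition delta (h : nat) : nat -> R := fun k => if Nat.eqb k h then 1 else 0.

Lemma delta_Delta n i h : (h < n i)%nat -> in_Delta_i n i (delta h).
Proof. intros Hh. unfold delta. split; [|split].
  - intros k _. destruct (Nat.eqb k h); lra.
  - intros k Hk. destruct (Nat.eqb_spec k h); [lia|auto].
  - apply rsum_delta; auto. Qed.

Lemma replace_Delta N n e i z : in_Delta N n e -> (i < N)%nat -> in_Delta_i n i z ->
  in_Delta N n (replace_i e i z).
Proof. intros [HD HJ] Hi Hz. unfold replace_i. split.
  - intros j Hj. destruct (Nat.eqb_spec j i). subst; auto. auto.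
  - intros j h Hj. destruct (Nat.eqb_spec j i). lia. auto. Qed.

Lemma fbar_replace_delta N n f e i h : fitness_hyp N n f -> in_Delta N n e -> inS N n i h ->
  fbar n f i (replace_i e i (delta h)) = f i h e.
Proof. intros Hf He [Hi Hh]. unfold fbar.
  assert (HR : in_Delta N n (replace_i e i (delta h))) by (apply replace_Delta; auto; apply delta_Delta; auto).
  rewrite (rsum_ext _ _ (fun k => if Nat.eqb k h then f i h (replace_i e i (delta h)) else 0)).
  rewrite rsum_delta by auto. symmetry. apply (f_own N n f i h); auto. split; auto.
  intros j k Hj. unfold replace_i. destruct (Nat.eqb_spec j i); [lia|auto].
  intros k Hk. unfold replace_i. rewrite Nat.eqb_refl. unfold delta.
  destruct (Nat.eqb_spec k h). subst; ring. ring. Qed.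

Lemma nash_vertex N n f e : fitness_hyp N n f -> strict_nash N n f e ->
  exists b, vertex N n e b /\
    forall i h, inS N n i h -> h <> b i -> f i h e < f i (b i) e.
Proof.
  intros Hf [He Hn].
  assert (Hlt : forall i h, inS N n i h -> delta h <> e i -> f i h e < fbar n f i e).
  { intros i h [Hi Hh] Hne. pose proof (Hn i Hi (delta h) (delta_Delta n i h Hh) Hne).
    rewrite (fbar_replace_delta N n f e i h) in H; auto. split; auto. }
  assert (Hex : forall i, exists b, (i < N)%nat -> (b < n i)%nat /\ forall k, (k < n i)%nat -> e i k = delta b k).
  { intros i. destruct (Nat.lt_ge_cases i N) as [Hi|Hi]; [|exists O; intros; lia].
    apply NNPP; intros Hno.
    assert (Hall : forall h, (h < n i)%nat -> f i h e < fbar n f i e).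
    { intros h Hh. apply Hlt. split; auto. intros Heq. apply Hno. exists h. intros _. split; auto.
      intros k Hk. rewrite Heq; auto. }
    destruct He as [HD _]. destruct (HD i Hi) as [Hp [_ Hs]].
    assert (Hpos : exists h, (h < n i)%nat /\ 0 < e i h).
    { apply NNPP; intros Hn0. assert (rsum (n i) (e i) <= 0).
      { replace 0 with (rsum (n i) (fun _ => 0)) by (rewrite rsum_const; ring). apply rsum_le.
        intros k Hk. apply Rnot_lt_le. intros Hlt'. apply Hn0. exists k; auto. }
      lra. }
    destruct Hpos as [h0 [Hh0 Hp0]].
    assert (Hsum : rsum (n i) (fun k => e i k * (fbar n f i e - f i k e)) = 0).
    { rewrite (rsum_ext _ _ (fun k => fbar n f i e * e i k - e i k * f i k e)) by (intros; ring).
      rewrite rsum_minus, rsum_scal, Hs. unfold fbar. ring. }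
    assert (Hterm : e i h0 * (fbar n f i e - f i h0 e) <= rsum (n i) (fun k => e i k * (fbar n f i e - f i k e))).
    { apply (rsum_term_le _ (fun k => e i k * (fbar n f i e - f i k e))); auto.
      intros k Hk. apply Rmult_le_pos. apply Hp; auto. pose proof (Hall k Hk); lra. }
    pose proof (Hall h0 Hh0). nra. }
  set (b := fun i => proj1_sig (constructive_indefinite_description _ (Hex i))).
  assert (Hb : forall i, (i < N)%nat -> (b i < n i)%nat /\ forall k, (k < n i)%nat -> e i k = delta (b i) k).
  { intros i. unfold b. destruct (constructive_indefinite_description _ (Hex i)); simpl; auto. }
  assert (Hfb : forall i, (i < N)%nat -> fbar n f i e = f i (b i) e).
  { intros i Hi. destruct (Hb i Hi) as [Hbi He']. unfold fbar.
    rewrite (rsum_ext _ _ (fun k => if Nat.eqb k (b i) then f i (b i) e else 0)).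
    apply rsum_delta; auto. intros k Hk. rewrite He' by auto. unfold delta.
    destruct (Nat.eqb_spec k (b i)). subst; ring. ring. }
  exists b. split.
  - split; auto. split. intros i Hi; apply Hb; auto.
    intros i h [Hi Hh]. destruct (Hb i Hi) as [_ He']. rewrite He' by auto. reflexivity.
  - intros i h [Hi Hh] Hne. rewrite <- Hfb by auto. apply Hlt. split; auto.
    intros Heq. destruct (Hb i Hi) as [_ He']. assert (delta h h = e i h) by (rewrite Heq; auto).
    rewrite He' in H by auto. unfold delta in H. rewrite Nat.eqb_refl in H.
    destruct (Nat.eqb_spec h (b i)); [lia|lra].
Qed.

Lemma analytic N n f e : fitness_hyp N n f -> strict_nash N n f e ->
  exists b, vertex N n e b /\ exists r kap L, 0 < r /\ 0 < kap /\ 0 <= L /\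
   (forall x y, in_Delta N n x -> in_Delta N n y -> dist N n x e < r -> dist N n y e < r ->
      forall i h, inS N n i h -> Rabs (g_fit n f i h x - g_fit n f i h y) <= L * dist N n x y) /\
   (forall x, in_Delta N n x -> dist N n x e < r -> forall i h, inS N n i h -> h <> b i ->
      g_fit n f i h x <= - kap).
Proof.
  intros Hf Hn. destruct (nash_vertex N n f e Hf Hn) as [b [Hv Hgap]].
  exists b. split; auto. pose proof Hv as [He [Hb _]].
  destruct (f_lip N n f e Hf He) as [r1 [B0 [Hr1 Hlip0]]].
  set (B := Rmax B0 0). assert (HB : 0 <= B) by apply Rmax_r.
  assert (Hlip : forall i h, inS N n i h -> forall x y, dist N n x e < r1 -> dist N n y e < r1 ->
      Rabs (f i h x - f i h y) <= B * dist N n x y).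
  { intros i h Hs x y Hx Hy. destruct (Hlip0 i h Hs) as [_ H]. eapply Rle_trans. apply H; auto.
    apply Rmult_le_compat_r. apply dist_nonneg. apply Rmax_l. }
  assert (Hee : dist N n e e = 0).
  { rewrite dist_eq. rewrite (sumS_ext _ _ _ (fun _ _ => 0)). unfold sumS.
    rewrite (rsum_ext _ _ (fun _ => 0)). rewrite rsum_const; ring. intros; rewrite rsum_const; ring.
    intros. rewrite Rminus_diag, Rabs_R0; auto. }
  assert (Hfb : forall i, (i < N)%nat -> fbar n f i e = f i (b i) e).
  { intros i Hi. destruct Hv as [_ [_ Hvv]]. unfold fbar.
    rewrite (rsum_ext _ _ (fun k => if Nat.eqb k (b i) then f i (b i) e else 0)).
    apply rsum_delta; auto. intros k Hk. rewrite Hvv by (split; auto).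
    destruct (Nat.eqb_spec k (b i)). subst; ring. ring. }
  destruct (finS_choice N n (fun i h k _ => h <> b i -> g_fit n f i h e <= - 2 * k)) as [kap [_ [Hkp Hkap]]].
  { intros i h k k' B1 B1' H Hk' _ Hne. specialize (H Hne). lra. }
  { intros i h Hs. destruct (Nat.eq_dec h (b i)).
    - exists 1, 0. split. lra. intros; contradiction.
    - exists ((f i (b i) e - f i h e) / 2), 0. pose proof (Hgap i h Hs n0). split. lra.
      intros _. unfold g_fit. rewrite Hfb by (destruct Hs; auto). lra. }
  set (SF := sumS N n (fun i h => Rabs (f i h e))).
  assert (HSF : 0 <= SF) by (apply sumS_nonneg; intros; apply Rabs_pos).
  set (Fb := SF + B * r1).
  set (nT := rsum N (fun i => INR (n i))).
  assert (HnT : 0 <= nT) by (apply rsum_nonneg; intros; apply pos_INR).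
  set (L := B + Fb + nT * B).
  assert (HL : 0 <= L) by (unfold L, Fb; nra).
  assert (Hglip : forall x y, in_Delta N n x -> in_Delta N n y -> dist N n x e < r1 -> dist N n y e < r1 ->
      forall i h, inS N n i h -> Rabs (g_fit n f i h x - g_fit n f i h y) <= L * dist N n x y).
  { intros x y Hx Hy Hxe Hye i h Hs. pose proof Hs as [Hi Hh]. unfold g_fit.
    replace (f i h x - fbar n f i x - (f i h y - fbar n f i y)) with
      ((f i h x - f i h y) - (fbar n f i x - fbar n f i y)) by ring.
    eapply Rle_trans. apply Rabs_triang. rewrite Rabs_Ropp.
    assert (Hfbar : Rabs (fbar n f i x - fbar n f i y) <= Fb * dist N n x y + nT * B * dist N n x y).
    { unfold fbar. rewrite <- rsum_minus. eapply Rle_trans. apply rsum_abs.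
      apply Rle_trans with (rsum (n i) (fun k => Fb * Rabs (x i k - y i k) + B * dist N n x y)).
      { apply rsum_le. intros k Hk.
        replace (x i k * f i k x - y i k * f i k y) with ((x i k - y i k) * f i k x + y i k * (f i k x - f i k y)) by ring.
        eapply Rle_trans. apply Rabs_triang. rewrite !Rabs_mult.
        assert (Hs' : inS N n i k) by (split; auto).
        assert (Rabs (f i k x) <= Fb).
        { pose proof (Hlip i k Hs' x e Hxe ltac:(lra)).
          assert (Rabs (f i k e) <= SF) by (apply (sumS_term_le N n (fun i h => Rabs (f i h e))); auto; intros; apply Rabs_pos).
          pose proof (Rabs_triang_inv (f i k x) (f i k e)).
          assert (B * dist N n x e <= B * r1) by (apply Rmult_le_compat_l; lra). unfold Fb. lra. }
        assert (Rabs (y i k) <= 1) by (pose proof (Delta_coord N n y i k Hy Hs'); rewrite Rabs_pos_eq; lra).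
        pose proof (Hlip i k Hs' x y Hxe Hye).
        apply Rplus_le_compat. rewrite Rmult_comm. apply Rmult_le_compat_r; auto. apply Rabs_pos.
        apply Rle_trans with (1 * Rabs (f i k x - f i k y)). apply Rmult_le_compat_r; auto. apply Rabs_pos. lra. }
      rewrite rsum_plus, rsum_scal, rsum_const.
      pose proof (rowsum_le_dist N n x y i Hi).
      assert (INR (n i) <= nT) by (apply (rsum_term_le N (fun i => INR (n i))); auto; intros; apply pos_INR).
      assert (Fb * rsum (n i) (fun k => Rabs (x i k - y i k)) <= Fb * dist N n x y)
        by (apply Rmult_le_compat_l; auto; unfold Fb; nra).
      pose proof (dist_nonneg N n x y).
      assert (INR (n i) * (B * dist N n x y) <= nT * (B * dist N n x y)) by (apply Rmult_le_compat_r; nra).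
      lra. }
    pose proof (Hlip i h Hs x y Hxe Hye). unfold L. lra. }
  set (r := Rmin r1 (kap / (L + 1))).
  assert (Hr : 0 < r) by (apply Rmin_pos; auto; apply Rdiv_lt_0_compat; lra).
  assert (Hrr1 : r <= r1) by apply Rmin_l.
  exists r, kap, L. split; auto. split; auto. split; auto. split.
  - intros x y Hx Hy Hxe Hye. apply Hglip; auto; lra.
  - intros x Hx Hxe i h Hs Hne. pose proof (Hglip x e Hx He ltac:(lra) ltac:(lra) i h Hs).
    pose proof (Hkap i h Hs Hne).
    assert (L * dist N n x e <= L * (kap / (L + 1))).
    { apply Rmult_le_compat_l; auto. pose proof (Rmin_r r1 (kap / (L + 1))). unfold r in *. lra. }
    assert (L * (kap / (L + 1)) <= kap).
    { replace (L * (kap / (L + 1))) with (kap - kap / (L + 1)) by (field; lra).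
      assert (0 < kap / (L + 1)) by (apply Rdiv_lt_0_compat; lra). lra. }
    pose proof (Rle_abs (g_fit n f i h x - g_fit n f i h e)). lra.
Qed.

Definition uM n f M (c : pt) x i h := M * c i h / (M - g_fit n f i h x).
Definition TM N n f b M c x : pt := fun i h =>
  if Nat.ltb i N then if Nat.ltb h (n i) then
    if Nat.eqb h (b i) then 1 - rsum (n i) (fun k => if Nat.eqb k (b i) then 0 else uM n f M c x i k)
    else uM n f M c x i h
  else 0 else 0.

Lemma TM_S N n f b M c x i h : inS N n i h -> TM N n f b M c x i h =
  if Nat.eqb h (b i) then 1 - rsum (n i) (fun k => if Nat.eqb k (b i) then 0 else uM n f M c x i k)
    else uM n f M c x i h.
Proof. intros [Hi Hh]. unfold TM. apply Nat.ltb_lt in Hi, Hh. rewrite Hi, Hh. auto. Qed.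

Lemma sumS_c N n c : in_Delta N n c -> sumS N n c = INR N.
Proof. intros [HD _]. unfold sumS. rewrite (rsum_ext _ _ (fun _ => 1)). rewrite rsum_const; ring.
  intros i Hi. destruct (HD i Hi) as [_ [_ H]]. auto. Qed.

Lemma lim_le a b : (forall eps, 0 < eps -> a <= b + eps) -> a <= b.
Proof. intros H. destruct (Rle_dec a b); auto. specialize (H ((a - b)/2) ltac:(lra)). lra. Qed.

Lemma half_pow_le1 j : 0 <= (/2)^j <= 1.
Proof. induction j; simpl; lra. Qed.
Lemma geo_tail m j : (/2)^(m + j) <= (/2)^m.
Proof. rewrite pow_add. pose proof (half_pow_le1 m). pose proof (half_pow_le1 j). nra. Qed.
Lemma geo_small_exists D eps : 0 <= D -> 0 < eps -> exists K, D * (/2)^K < eps.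
Proof. intros HD He. destruct (pow_lt_1_zero (/2) ltac:(rewrite Rabs_pos_eq; lra) (eps / (D + 1))) as [K HK].
  apply Rdiv_lt_0_compat; lra. exists K. specialize (HK K (le_n _)).
  rewrite Rabs_pos_eq in HK by (apply pow_le; lra).
  apply Rmult_lt_compat_l with (r := D + 1) in HK; [|lra].
  replace ((D + 1) * (eps / (D + 1))) with eps in HK by (field; lra).
  pose proof (half_pow_le1 K). nra. Qed.

Section Exist.
Variables (N : nat) (n : nat -> nat) (f : nat -> nat -> pt -> R) (e : pt) (b : nat -> nat)
  (r kap L : R) (c : pt) (M : R).
Hypothesis Hv : vertex N n e b.
Hypothesis Hr : 0 < r.
Hypothesis Hk : 0 < kap.
Hypothesis HL : 0 <= L.
Hypothesis Hlip : forall x y, in_Delta N n x -> in_Delta N n y -> dist N n x e < r -> dist N n y e < r ->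
      forall i h, inS N n i h -> Rabs (g_fit n f i h x - g_fit n f i h y) <= L * dist N n x y.
Hypothesis Hneg : forall x, in_Delta N n x -> dist N n x e < r -> forall i h, inS N n i h -> h <> b i ->
      g_fit n f i h x <= - kap.
Hypothesis Hc : in_int_Delta N n c.
Hypothesis HM : 0 < M.
Hypothesis HMk : M <= kap.
Hypothesis HMr : 2 * INR N / kap * M <= r / 2.
Hypothesis HMq : 2 * M * L * INR N / (kap * kap) <= / 2.

Definition Bl x := in_Delta N n x /\ dist N n x e < r.
Let T := TM N n f b M c.
Let u := uM n f M c.

Lemma c_le1 i h : inS N n i h -> 0 < c i h <= 1.
Proof. intros Hs. destruct Hc as [Hc1 Hc2]. split. apply Hc2; auto. apply (Delta_coord N n c i h Hc1 Hs). Qed.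

Lemma u_bounds x i h : Bl x -> inS N n i h -> h <> b i -> 0 < u x i h <= M / kap * c i h.
Proof. intros [Hx Hxe] Hs Hne. pose proof (Hneg x Hx Hxe i h Hs Hne). pose proof (c_le1 i h Hs).
  unfold u, uM. split. apply Rdiv_lt_0_compat; nra.
  replace (M / kap * c i h) with (M * c i h * / kap) by (field; lra).
  unfold Rdiv. apply Rmult_le_compat_l. nra. apply Rinv_le_contravar; lra. Qed.

Lemma u_lip x y i h : Bl x -> Bl y -> inS N n i h -> h <> b i ->
  Rabs (u x i h - u y i h) <= M * L / (kap * kap) * c i h * dist N n x y.
Proof. intros [Hx Hxe] [Hy Hye] Hs Hne. pose proof (Hneg x Hx Hxe i h Hs Hne). pose proof (Hneg y Hy Hye i h Hs Hne).
  pose proof (Hlip x y Hx Hy Hxe Hye i h Hs). pose proof (c_le1 i h Hs).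
  set (gx := g_fit n f i h x) in *. set (gy := g_fit n f i h y) in *.
  unfold u, uM. fold gx gy.
  replace (M * c i h / (M - gx) - M * c i h / (M - gy)) with (M * c i h * (gx - gy) / ((M - gx) * (M - gy))) by (field; lra).
  unfold Rdiv. rewrite !Rabs_mult. rewrite (Rabs_pos_eq M), (Rabs_pos_eq (c i h)) by lra.
  rewrite Rabs_inv, (Rabs_pos_eq ((M - gx) * (M - gy))) by nra.
  assert (kap * kap <= (M - gx) * (M - gy)) by nra.
  assert (/ ((M - gx) * (M - gy)) <= / (kap * kap)) by (apply Rinv_le_contravar; nra).
  assert (0 <= / ((M - gx) * (M - gy))) by (left; apply Rinv_0_lt_compat; nra).
  assert (0 <= M * c i h) by nra.
  assert (0 < / (kap * kap)) by (apply Rinv_0_lt_compat; nra).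
  pose proof (Rabs_pos (gx - gy)).
  apply Rle_trans with (M * c i h * (L * dist N n x y) * / (kap * kap)).
  - apply Rle_trans with (M * c i h * Rabs (gx - gy) * / (kap * kap)).
    + rewrite (Rmult_assoc M (c i h)). apply Rmult_le_compat_l; nra.
    + apply Rmult_le_compat_r; [lra|]. apply Rmult_le_compat_l; nra.
  - right. field. lra. Qed.

Lemma T_off x i h : inS N n i h -> h <> b i -> T x i h = u x i h.
Proof. intros Hs Hne. unfold T. rewrite TM_S by auto. destruct (Nat.eqb_spec h (b i)); [lia|auto]. Qed.

Lemma off_sum_u x i : Bl x -> (i < N)%nat ->
  rsum (n i) (fun k => if Nat.eqb k (b i) then 0 else u x i k) <= M / kap.
Proof. intros Hx Hi. destruct Hc as [[HD _] _]. destruct (HD i Hi) as [_ [_ Hs]].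
  apply Rle_trans with (rsum (n i) (fun k => M / kap * c i k)).
  - apply rsum_le. intros k Hk0. destruct (Nat.eqb_spec k (b i)).
    + pose proof (c_le1 i k (conj Hi Hk0)). assert (0 < M / kap) by (apply Rdiv_lt_0_compat; lra). nra.
    + apply u_bounds; auto. split; auto.
  - rewrite rsum_scal, Hs. lra. Qed.

Lemma T_Delta x : Bl x -> in_Delta N n (T x).
Proof. intros Hx. destruct Hv as [He [Hb Hvv]]. split.
  - intros i Hi. split; [|split].
    + intros h Hh. unfold T; rewrite TM_S by (split; auto). destruct (Nat.eqb_spec h (b i)).
      * pose proof (off_sum_u x i Hx Hi). assert (M / kap <= 1).
        { unfold Rdiv. apply (Rmult_le_reg_r kap); auto. rewrite Rmult_assoc, Rinv_l by lra. lra. }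
        unfold u in *. lra.
      * left. apply u_bounds; auto. split; auto.
    + intros h Hh. unfold T, TM. apply Nat.ltb_lt in Hi. rewrite Hi.
      destruct (Nat.ltb_spec h (n i)); [lia|auto].
    + rewrite (rsum_split _ _ (b i) (Hb i Hi)). unfold T at 1. rewrite TM_S by (split; auto; apply Hb; auto).
      rewrite Nat.eqb_refl.
      rewrite (rsum_ext _ (fun k => if Nat.eqb k (b i) then 0 else T x i k)
         (fun k => if Nat.eqb k (b i) then 0 else u x i k)). unfold u; ring.
      intros k Hk0. destruct (Nat.eqb_spec k (b i)); auto. apply T_off; auto. split; auto.
  - intros i h Hi. unfold T, TM. destruct (Nat.ltb_spec i N); [lia|auto]. Qed.

Lemma T_dist_e x : Bl x -> dist N n (T x) e <= 2 * INR N / kap * M.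
Proof. intros Hx. rewrite (dist_e N n e b (T x) Hv (T_Delta x Hx)).
  apply Rle_trans with (2 * sumS N n (fun i h => M / kap * c i h)).
  - apply Rmult_le_compat_l; [lra|]. apply sumS_le. intros i h Hs. unfold off.
    destruct (Nat.eqb_spec h (b i)).
    + pose proof (c_le1 i h Hs). assert (0 < M / kap) by (apply Rdiv_lt_0_compat; lra). nra.
    + rewrite T_off by auto. apply u_bounds; auto.
  - rewrite sumS_scal, sumS_c by (destruct Hc; auto). right; field; lra. Qed.

Lemma T_contr x y : Bl x -> Bl y -> dist N n (T x) (T y) <= / 2 * dist N n x y.
Proof. intros Hx Hy. eapply Rle_trans. apply (dist_off N n e b); auto; apply T_Delta; auto.
  apply Rle_trans with (2 * sumS N n (fun i h => M * L / (kap * kap) * dist N n x y * c i h)).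
  - apply Rmult_le_compat_l; [lra|]. apply sumS_le. intros i h Hs. unfold off.
    destruct (Nat.eqb_spec h (b i)).
    + pose proof (c_le1 i h Hs). assert (0 <= M * L / (kap * kap)) by (apply Rmult_le_pos; [nra|left; apply Rinv_0_lt_compat; nra]).
      pose proof (dist_nonneg N n x y). assert (0 <= M * L / (kap * kap) * dist N n x y) by nra. nra.
    + rewrite !T_off by auto. eapply Rle_trans. apply u_lip; auto. right; ring.
  - rewrite sumS_scal, sumS_c by (destruct Hc; auto).
    pose proof (dist_nonneg N n x y).
    replace (2 * (M * L / (kap * kap) * dist N n x y * INR N)) with ((2 * M * L * INR N / (kap * kap)) * dist N n x y) by (field; lra).
    apply Rmult_le_compat_r; auto. Qed.


Lemma dist_self x : dist N n x x = 0.
Proof. rewrite dist_eq. rewrite (sumS_ext _ _ _ (fun _ _ => 0)). unfold sumS.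
  rewrite (rsum_ext _ _ (fun _ => 0)). rewrite rsum_const; ring. intros; rewrite rsum_const; ring.
  intros. rewrite Rminus_diag, Rabs_R0; auto. Qed.

Let CM := 2 * INR N / kap * M.
Lemma CM_nonneg : 0 <= CM.
Proof. unfold CM. apply Rmult_le_pos; [|lra]. apply Rmult_le_pos. pose proof (pos_INR N); lra.
  left; apply Rinv_0_lt_compat; lra. Qed.

Let y m := Nat.iter m T e.

Lemma y_Bl m : Bl (y m) /\ dist N n (y m) e <= CM.
Proof. destruct Hv as [He _]. pose proof CM_nonneg. induction m.
  - change (y 0%nat) with e. unfold Bl. rewrite dist_self. split; [split|]; auto; lra.
  - change (y (S m)) with (T (y m)). destruct IHm as [Hb _].
    pose proof (T_dist_e (y m) Hb). unfold Bl. split; [split|]; auto. apply T_Delta; auto.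
    unfold CM in *. lra. Qed.

Lemma y_step m : dist N n (y (S m)) (y m) <= (/2)^m * CM.
Proof. induction m.
  - change (y 1%nat) with (T e). change (y 0%nat) with e. rewrite pow_O, Rmult_1_l. destruct Hv as [He _].
    assert (Bl e) by (split; auto; rewrite dist_self; lra).
    apply T_dist_e; auto.
  - change (y (S (S m))) with (T (y (S m))). change (y (S m)) with (T (y m)) at 2.
    eapply Rle_trans. apply T_contr; apply y_Bl. rewrite <- tech_pow_Rmult. lra. Qed.

Lemma y_cauchy m j : dist N n (y m) (y (m + j)) <= 2 * CM * (/2)^m * (1 - (/2)^j).
Proof. induction j.
  - rewrite Nat.add_0_r, dist_self. simpl. lra.
  - eapply Rle_trans. apply (dist_tri N n _ (y (m + j))).
    rewrite (dist_sym N n (y (m + j))). replace (m + S j)%nat with (S (m + j)) by lia.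
    pose proof (y_step (m + j)). rewrite pow_add in H. rewrite <- tech_pow_Rmult. set (a := (/2)^m) in *. set (q := (/2)^j) in *. nra. Qed.

Lemma y_cauchy2 m p : (m <= p)%nat -> dist N n (y m) (y p) <= 2 * CM * (/2)^m.
Proof. intros Hp. replace p with (m + (p - m))%nat by lia. eapply Rle_trans. apply y_cauchy.
  pose proof (half_pow_le1 (p - m)). pose proof (half_pow_le1 m). pose proof CM_nonneg. rewrite <- (Rmult_1_r (2 * CM * (/2)^m)) at 2. apply Rmult_le_compat_l; [|lra]. apply Rmult_le_pos; lra. Qed.

Lemma y_coord m p i h : (m <= p)%nat -> Rabs (y m i h - y p i h) <= 2 * CM * (/2)^m.
Proof. intros Hp. eapply Rle_trans. apply coord_le_dist_D; apply y_Bl. apply y_cauchy2; auto. Qed.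

Lemma y_Cauchy i h : Cauchy_crit (fun m => y m i h).
Proof. intros eps Heps. destruct (geo_small_exists (2 * CM) eps) as [K HK]; auto.
  pose proof CM_nonneg; lra. exists K. intros p q Hp Hq. unfold R_dist.
  destruct (Nat.le_ge_cases p q).
  - eapply Rle_lt_trans. apply y_coord; auto. eapply Rle_lt_trans; [|apply HK].
    replace p with (K + (p - K))%nat by lia. pose proof (geo_tail K (p - K)). pose proof CM_nonneg. nra.
  - rewrite Rabs_minus_sym. eapply Rle_lt_trans. apply y_coord; auto. eapply Rle_lt_trans; [|apply HK].
    replace q with (K + (q - K))%nat by lia. pose proof (geo_tail K (q - K)). pose proof CM_nonneg. nra.
Qed.

Lemma fixed_point : exists x, Bl x /\ dist N n x e <= CM /\
  forall i h, inS N n i h -> T x i h = x i h.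
Proof.
  set (xs := fun i h => proj1_sig (R_complete _ (y_Cauchy i h))).
  assert (Hxs : forall i h m, Rabs (y m i h - xs i h) <= 2 * CM * (/2)^m).
  { intros i h m. unfold xs. destruct (R_complete _ (y_Cauchy i h)) as [l Hl]. simpl.
    apply lim_le. intros eps Heps. destruct (Hl eps Heps) as [K HK].
    specialize (HK (max K m) ltac:(lia)). unfold R_dist in HK.
    pose proof (y_coord m (max K m) i h ltac:(lia)).
    replace (y m i h - l) with ((y m i h - y (max K m) i h) + (y (max K m) i h - l)) by ring.
    eapply Rle_trans. apply Rabs_triang. lra. }
  pose proof CM_nonneg as HCM.
  assert (HD : in_Delta N n xs).
  { split.
    - intros i Hi. split; [|split].
      + intros h Hh. cut (- xs i h <= 0). lra.
        apply (geom_small _ (2 * CM)). intros m. specialize (Hxs i h m).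
        destruct (y_Bl m) as [[[HD _] _] _]. destruct (HD i Hi) as [Hp _]. specialize (Hp h Hh).
        pose proof (Rle_abs (y m i h - xs i h)). lra.
      + intros h Hh. assert (Rabs (xs i h) <= 0).
        { apply (geom_small _ (2 * CM)). intros m. specialize (Hxs i h m).
          destruct (y_Bl m) as [[[HD _] _] _]. destruct (HD i Hi) as [_ [Hz _]]. rewrite Hz in Hxs by auto.
          rewrite Rabs_minus_sym, Rminus_0_r in Hxs. auto. }
        pose proof (Rabs_pos (xs i h)). destruct (Rcase_abs (xs i h)); [rewrite Rabs_left in *|rewrite Rabs_right in *]; lra.
      + assert (Rabs (1 - rsum (n i) (xs i)) <= 0).
        { apply (geom_small _ (INR (n i) * (2 * CM))). intros m.
          destruct (y_Bl m) as [[[HD _] _] _]. destruct (HD i Hi) as [_ [_ Hs]]. rewrite <- Hs.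
          rewrite <- rsum_minus. eapply Rle_trans. apply rsum_abs.
          eapply Rle_trans. apply (rsum_le _ _ (fun _ => 2 * CM * (/2)^m)). intros; apply Hxs.
          rewrite rsum_const. right; ring. }
        pose proof (Rabs_pos (1 - rsum (n i) (xs i))). destruct (Rcase_abs (1 - rsum (n i) (xs i))); [rewrite Rabs_left in *|rewrite Rabs_right in *]; lra.
    - intros i h Hi. assert (Rabs (xs i h) <= 0).
      { apply (geom_small _ (2 * CM)). intros m. specialize (Hxs i h m).
        destruct (y_Bl m) as [[[_ HJ] _] _]. rewrite HJ in Hxs by auto.
        rewrite Rabs_minus_sym, Rminus_0_r in Hxs. auto. }
      pose proof (Rabs_pos (xs i h)). destruct (Rcase_abs (xs i h)); [rewrite Rabs_left in *|rewrite Rabs_right in *]; lra. }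
  assert (Hdy : forall m, dist N n (y m) xs <= cnt N n * (2 * CM * (/2)^m)).
  { intros m. apply sumS_bound. intros; apply Hxs. }
  assert (Hxe : dist N n xs e <= CM).
  { assert (dist N n xs e - CM <= 0).
    { apply (geom_small _ (cnt N n * (2 * CM))). intros m. pose proof (dist_tri N n xs (y m) e).
      pose proof (dist_sym N n (y m) xs). pose proof (Hdy m). destruct (y_Bl m) as [_ Hm].
      rewrite Rmult_assoc. lra. }
    lra. }
  assert (HBl : Bl xs) by (split; auto; unfold CM in *; lra).
  exists xs. split; auto. split; auto.
  assert (Hfix : dist N n (T xs) xs <= 0).
  { apply (geom_small _ (cnt N n * (2 * CM) * 2)). intros m.
    pose proof (dist_tri N n (T xs) (T (y m)) xs).
    pose proof (T_contr xs (y m) HBl (proj1 (y_Bl m))).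
    change (T (y m)) with (y (S m)) in *.
    pose proof (Hdy (S m)). pose proof (Hdy m). rewrite dist_sym in H2.
    rewrite <- tech_pow_Rmult in H1. pose proof (cnt_nonneg N n). pose proof (half_pow_le1 m).
    set (a := (/2)^m) in *. set (P := cnt N n * (2 * CM * a)).
    assert (0 <= P) by (unfold P; apply Rmult_le_pos; [lra|apply Rmult_le_pos; lra]).
    replace (cnt N n * (2 * CM * (/ 2 * a))) with (/2 * P) in H1 by (unfold P; ring).
    replace (cnt N n * (2 * CM) * 2 * a) with (2 * P) by (unfold P; ring).
    fold P in H2. lra. }
  intros i h Hs. apply (dist_zero_eq N n); auto.
Qed.
End Exist.

Lemma row_phi_sum N n f M c x i : in_Delta N n x -> in_Delta N n c -> (i < N)%nat ->
  rsum (n i) (phi n f M c x i) = 0.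
Proof. intros [Hx _] [Hc _] Hi. destruct (Hx i Hi) as [_ [_ Sx]]. destruct (Hc i Hi) as [_ [_ Sc]].
  unfold phi, g_fit. rewrite rsum_plus.
  rewrite (rsum_ext _ (fun h => x i h * (f i h x - fbar n f i x)) (fun h => x i h * f i h x - fbar n f i x * x i h)) by (intros; ring).
  rewrite rsum_minus, rsum_scal, rsum_scal, rsum_minus, Sx, Sc. unfold fbar. ring. Qed.

Lemma existence N n f e b r kap L c : vertex N n e b -> 0 < r -> 0 < kap -> 0 <= L ->
  (forall x y, in_Delta N n x -> in_Delta N n y -> dist N n x e < r -> dist N n y e < r ->
      forall i h, inS N n i h -> Rabs (g_fit n f i h x - g_fit n f i h y) <= L * dist N n x y) ->
  (forall x, in_Delta N n x -> dist N n x e < r -> forall i h, inS N n i h -> h <> b i ->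
      g_fit n f i h x <= - kap) ->
  in_int_Delta N n c ->
  exists M0 C, 0 < M0 /\ 0 <= C /\ forall M, 0 < M <= M0 ->
    exists x, in_Delta N n x /\ (forall i h, inS N n i h -> phi n f M c x i h = 0) /\
      dist N n x e <= C * M.
Proof.
  intros Hv Hr Hk HL Hlip Hneg Hc.
  set (NN := INR N). assert (HNN : 0 <= NN) by apply pos_INR.
  set (M0 := Rmin kap (Rmin (r * kap / (4 * NN + 4)) (kap * kap / (4 * L * NN + 4)))).
  assert (HM0 : 0 < M0).
  { unfold M0. repeat apply Rmin_pos; auto; apply Rdiv_lt_0_compat; nra. }
  exists M0, (2 * NN / kap). split; auto. split.
  { apply Rmult_le_pos. lra. left; apply Rinv_0_lt_compat; lra. }
  intros M [HM HMM0].
  assert (HMk : M <= kap) by (pose proof (Rmin_l kap (Rmin (r * kap / (4 * NN + 4)) (kap * kap / (4 * L * NN + 4)))); unfold M0 in *; lra).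
  assert (HM1 : M <= r * kap / (4 * NN + 4)).
  { pose proof (Rmin_r kap (Rmin (r * kap / (4 * NN + 4)) (kap * kap / (4 * L * NN + 4)))).
    pose proof (Rmin_l (r * kap / (4 * NN + 4)) (kap * kap / (4 * L * NN + 4))). unfold M0 in *; lra. }
  assert (HM2 : M <= kap * kap / (4 * L * NN + 4)).
  { pose proof (Rmin_r kap (Rmin (r * kap / (4 * NN + 4)) (kap * kap / (4 * L * NN + 4)))).
    pose proof (Rmin_r (r * kap / (4 * NN + 4)) (kap * kap / (4 * L * NN + 4))). unfold M0 in *; lra. }
  assert (HMr : 2 * NN / kap * M <= r / 2).
  { apply Rmult_le_compat_l with (r := 2 * NN / kap) in HM1.
    2:{ apply Rmult_le_pos. lra. left; apply Rinv_0_lt_compat; lra. }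
    eapply Rle_trans. apply HM1. replace (2 * NN / kap * (r * kap / (4 * NN + 4))) with (r / 2 * (4 * NN / (4 * NN + 4))) by (field; lra).
    assert (4 * NN / (4 * NN + 4) <= 1).
    { apply (Rmult_le_reg_r (4 * NN + 4)). lra. unfold Rdiv; rewrite Rmult_assoc, Rinv_l by lra. lra. }
    nra. }
  assert (HMq : 2 * M * L * NN / (kap * kap) <= / 2).
  { replace (2 * M * L * NN / (kap * kap)) with (M * (2 * L * NN / (kap * kap))) by (field; lra).
    assert (0 <= 2 * L * NN / (kap * kap)) by (apply Rmult_le_pos; [nra|left; apply Rinv_0_lt_compat; nra]).
    apply Rle_trans with (kap * kap / (4 * L * NN + 4) * (2 * L * NN / (kap * kap))).
    apply Rmult_le_compat_r; auto.
    replace (kap * kap / (4 * L * NN + 4) * (2 * L * NN / (kap * kap))) with (/2 * (4 * L * NN / (4 * L * NN + 4))) by (field; nra).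
    assert (4 * L * NN / (4 * L * NN + 4) <= 1).
    { apply (Rmult_le_reg_r (4 * L * NN + 4)). nra. unfold Rdiv; rewrite Rmult_assoc, Rinv_l by nra. lra. }
    lra. }
  destruct (fixed_point N n f e b r kap L c M Hv Hr Hk HL Hlip Hneg Hc HM HMk HMr HMq) as [x [[Hx Hxe] [Hd Hfix]]].
  exists x. split; auto. split; auto.
  destruct Hv as [He [Hb _]].
  assert (Hoff : forall i h, inS N n i h -> h <> b i -> phi n f M c x i h = 0).
  { intros i h Hs Hne. pose proof (Hneg x Hx Hxe i h Hs Hne).
    assert (Hxih : x i h = M * c i h / (M - g_fit n f i h x)).
    { rewrite <- (Hfix i h Hs). rewrite T_off by auto. reflexivity. }
    unfold phi. rewrite Hxih. field. lra. }
  intros i h Hs. destruct (Nat.eq_dec h (b i)); auto.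
  subst. destruct Hs as [Hi _]. pose proof (row_phi_sum N n f M c x i Hx (proj1 Hc) Hi).
  rewrite (rsum_split _ _ (b i) (Hb i Hi)) in H.
  rewrite (rsum_ext _ _ (fun _ => 0)) in H. rewrite rsum_const in H. lra.
  intros k Hk0. destruct (Nat.eqb_spec k (b i)); auto. apply Hoff; auto. split; auto.
Qed.

Section ODE.
Variables (q dq : R -> R).
Hypothesis Hd : forall t, 0 < t -> derivable_pt_lim q t (dq t).
Hypothesis H0 : forall eps, 0 < eps -> exists d, 0 < d /\ forall t, 0 <= t < d -> Rabs (q t - q 0) < eps.

Lemma cont_pos t : 0 < t -> forall eps, 0 < eps -> exists d, 0 < d /\
  forall s, Rabs (s - t) < d -> Rabs (q s - q t) < eps.
Proof. intros Ht eps Heps.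
  pose proof (derivable_continuous_pt q t (exist _ (dq t) (Hd t Ht))) as Hc.
  unfold continuity_pt, continue_in, limit1_in, limit_in in Hc. simpl in Hc.
  destruct (Hc eps Heps) as [alp [Halp H]]. exists alp. split; auto. intros s Hs.
  destruct (Req_dec s t). subst. rewrite Rminus_diag, Rabs_R0; auto.
  apply H. unfold D_x, no_cond in *. simpl. unfold R_dist. repeat split; auto. Qed.

Lemma RC a : 0 <= a -> forall eps, 0 < eps -> exists d, 0 < d /\
  forall s, a <= s < a + d -> Rabs (q s - q a) < eps.
Proof. intros Ha eps Heps. destruct (Req_dec a 0) as [Ha0|Ha0].
  - subst. destruct (H0 eps Heps) as [d [Hd' H]]. exists d. split; auto. intros s Hs; apply H; lra.
  - destruct (cont_pos a ltac:(lra) eps Heps) as [d [Hd' H]]. exists d. split; auto.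
    intros s Hs; apply H. rewrite Rabs_pos_eq; lra. Qed.

Lemma RATE a b m : 0 <= a < b -> 0 <= m -> (forall t, a < t < b -> dq t <= - m) ->
  q b <= q a - m * (b - a).
Proof. intros Hab Hm Hder. apply lim_le. intros eps Heps.
  destruct (RC a ltac:(lra) (eps / 3) ltac:(lra)) as [d1 [Hd1 H1]].
  destruct (cont_pos b ltac:(lra) (eps / 3) ltac:(lra)) as [d2 [Hd2 H2]].
  set (del := Rmin (Rmin (d1/2) (d2/2)) (Rmin ((b - a) / 3) (eps / (6 * (m + 1))))).
  assert (Hdel : 0 < del).
  { unfold del. repeat apply Rmin_pos; try lra. apply Rdiv_lt_0_compat; lra. }
  assert (Hdel1 : del <= d1/2) by (unfold del; pose proof (Rmin_l (Rmin (d1/2) (d2/2)) (Rmin ((b - a) / 3) (eps / (6 * (m + 1))))); pose proof (Rmin_l (d1/2) (d2/2)); lra).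
  assert (Hdel2 : del <= d2/2) by (unfold del; pose proof (Rmin_l (Rmin (d1/2) (d2/2)) (Rmin ((b - a) / 3) (eps / (6 * (m + 1))))); pose proof (Rmin_r (d1/2) (d2/2)); lra).
  assert (Hdel3 : del <= (b - a) / 3) by (unfold del; pose proof (Rmin_r (Rmin (d1/2) (d2/2)) (Rmin ((b - a) / 3) (eps / (6 * (m + 1))))); pose proof (Rmin_l ((b - a) / 3) (eps / (6 * (m + 1)))); lra).
  assert (Hdel4 : del <= eps / (6 * (m + 1))) by (unfold del; pose proof (Rmin_r (Rmin (d1/2) (d2/2)) (Rmin ((b - a) / 3) (eps / (6 * (m + 1))))); pose proof (Rmin_r ((b - a) / 3) (eps / (6 * (m + 1)))); lra).
  assert (Hmd : m * del <= eps / 6).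
  { apply Rle_trans with ((m + 1) * (eps / (6 * (m + 1)))).
    apply Rmult_le_compat; lra. right; field; lra. }
  destruct (MVT_cor2 q dq (a + del) (b - del) ltac:(lra)) as [c [Hc1 Hc2]].
  { intros c Hc. apply Hd. lra. }
  assert (dq c <= - m) by (apply Hder; lra).
  assert (Hs1 : Rabs (q (a + del) - q a) < eps / 3) by (apply H1; lra).
  assert (Hs2 : Rabs (q (b - del) - q b) < eps / 3) by (apply H2; replace (b - del - b) with (- del) by ring; rewrite Rabs_Ropp, Rabs_pos_eq; lra).
  apply Rabs_def2 in Hs1. apply Rabs_def2 in Hs2.
  assert (dq c * (b - del - (a + del)) <= - m * (b - del - (a + del))) by (apply Rmult_le_compat_r; lra).
  nra. Qed.

Lemma barrier rho : q 0 < rho -> (forall t, 0 < t -> q t < rho -> dq t <= 0) ->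
  forall t, 0 <= t -> q t <= q 0.
Proof. intros Hq0 Hder t1 Ht1. apply Rnot_lt_le. intros Hgt.
  set (lam := (q 0 + Rmin (q t1) rho) / 2).
  assert (Hl1 : q 0 < lam) by (unfold lam; pose proof (Rmin_glb_lt (q t1) rho (q 0) ltac:(lra) Hq0) as HH; lra).
  assert (Hl2 : lam < q t1) by (unfold lam; pose proof (Rmin_l (q t1) rho); pose proof (Rmin_glb_lt (q t1) rho (q 0) ltac:(lra) Hq0); lra).
  assert (Hl3 : lam < rho) by (unfold lam; pose proof (Rmin_r (q t1) rho); pose proof (Rmin_glb_lt (q t1) rho (q 0) ltac:(lra) Hq0); lra).
  set (E := fun t => 0 <= t <= t1 /\ forall s, 0 <= s <= t -> q s < lam).
  assert (HE0 : E 0). { split. lra. intros s Hs. replace s with 0 by lra. auto. }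
  destruct (completeness E) as [tau [Hub Hlub]].
  { exists t1. intros t [Ht _]. lra. }
  { exists 0; auto. }
  assert (Htau0 : 0 <= tau) by (apply Hub; auto).
  assert (Htau1 : tau <= t1) by (apply Hlub; intros t [Ht _]; lra).
  assert (HA : forall s, 0 <= s < tau -> q s < lam).
  { intros s Hs. apply NNPP; intros Hn.
    assert (is_upper_bound E s).
    { intros t [Ht Hall]. apply Rnot_lt_le. intros Hst. apply Hn. apply Hall. lra. }
    specialize (Hlub s H). lra. }
  assert (HB : lam <= q tau).
  { apply Rnot_lt_le. intros Hlt.
    assert (Htt : tau < t1) by (destruct (Req_dec tau t1); [subst; lra|lra]).
    destruct (RC tau Htau0 (lam - q tau) ltac:(lra)) as [d [Hd' Hrc]].
    set (tau' := tau + Rmin d (t1 - tau) / 2).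
    assert (Hm : 0 < Rmin d (t1 - tau)) by (apply Rmin_pos; lra).
    assert (Hm1 : Rmin d (t1 - tau) <= d) by apply Rmin_l.
    assert (Hm2 : Rmin d (t1 - tau) <= t1 - tau) by apply Rmin_r.
    assert (E tau').
    { split. unfold tau'; lra. intros s Hs. destruct (Rlt_le_dec s tau).
      - apply HA; lra.
      - assert (Rabs (q s - q tau) < lam - q tau) by (apply Hrc; unfold tau' in Hs; lra).
        apply Rabs_def2 in H. lra. }
    specialize (Hub _ H). unfold tau' in Hub. lra. }
  assert (Htaup : 0 < tau) by (destruct (Req_dec tau 0); [subst; lra|lra]).
  pose proof (RATE 0 tau 0 ltac:(lra) ltac:(lra)).
  assert (q tau <= q 0 - 0 * (tau - 0)).
  { apply H. intros t Ht. rewrite Ropp_0. apply Hder. lra. pose proof (HA t ltac:(lra)). lra. }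
  lra. Qed.

Lemma lyap rho kap : 0 < kap -> (forall t, 0 <= t -> 0 <= q t) -> q 0 < rho ->
  (forall t, 0 < t -> q t < rho -> dq t <= - kap * q t) ->
  (forall t, 0 <= t -> q t <= q 0) /\ (forall eta, 0 < eta -> exists T, forall t, T <= t -> q t < eta).
Proof. intros Hk Hpos Hq0 Hder.
  assert (Hbar : forall t, 0 <= t -> q t <= q 0).
  { apply (barrier rho); auto. intros t Ht Hq. pose proof (Hder t Ht Hq). pose proof (Hpos t ltac:(lra)). nra. }
  assert (Hneg : forall t, 0 < t -> dq t <= - kap * q t).
  { intros t Ht. apply Hder; auto. pose proof (Hbar t ltac:(lra)). lra. }
  assert (Hmono : forall t1 t2, 0 <= t1 <= t2 -> q t2 <= q t1).
  { intros t1 t2 Ht. destruct (Req_dec t1 t2) as [He|He]. subst; lra.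
    assert (q t2 <= q t1 - 0 * (t2 - t1)).
    { apply RATE. lra. lra. intros t Htt. pose proof (Hneg t ltac:(lra)). pose proof (Hpos t ltac:(lra)). nra. }
    lra. }
  split; auto.
  intros eta Heta. set (T := q 0 / (kap * eta) + 1).
  assert (HT : 0 < T).
  { unfold T. assert (0 <= q 0 / (kap * eta)) by (apply Rmult_le_pos; [apply Hpos; lra|left; apply Rinv_0_lt_compat; nra]). lra. }
  assert (HqT : q T < eta).
  { apply Rnot_le_lt. intros HqT.
    assert (q T <= q 0 - (kap * eta) * (T - 0)).
    { apply RATE. lra. nra. intros t Ht. pose proof (Hneg t ltac:(lra)). pose proof (Hmono t T ltac:(lra)). nra. }
    assert ((kap * eta) * T = q 0 + kap * eta) by (unfold T; field; nra).
    nra. }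
  exists T. intros t Ht. pose proof (Hmono T t ltac:(lra)). lra.
Qed.
End ODE.

Lemma dpl_eq f x l l' : derivable_pt_lim f x l -> l = l' -> derivable_pt_lim f x l'.
Proof. intros H E; subst; auto. Qed.

Lemma derive_rsum m (F : R -> nat -> R) dF t0 :
  (forall k, (k < m)%nat -> derivable_pt_lim (fun t => F t k) t0 (dF k)) ->
  derivable_pt_lim (fun t => rsum m (F t)) t0 (rsum m dF).
Proof. induction m; intros H; simpl.
  - apply (derivable_pt_lim_const 0).
  - apply (derivable_pt_lim_plus (fun t => rsum m (F t)) (fun t => F t m)).
    apply IHm; intros; apply H; lia. apply H; lia. Qed.

Lemma derive_sumS N n (F : R -> nat -> nat -> R) dF t0 :
  (forall i h, inS N n i h -> derivable_pt_lim (fun t => F t i h) t0 (dF i h)) ->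
  derivable_pt_lim (fun t => sumS N n (F t)) t0 (sumS N n dF).
Proof. intros H. unfold sumS. apply (derive_rsum N (fun t i => rsum (n i) (fun h => F t i h))).
  intros i Hi. apply (derive_rsum (n i) (fun t h => F t i h)). intros h Hh. apply H; split; auto. Qed.

Section Stab.
Variables (N : nat) (n : nat -> nat) (f : nat -> nat -> pt -> R) (e : pt) (b : nat -> nat)
  (r kap L : R) (c : pt) (M : R) (x : pt).
Hypothesis Hv : vertex N n e b.
Hypothesis Hr : 0 < r.
Hypothesis Hk : 0 < kap.
Hypothesis HL : 0 <= L.
Hypothesis Hlip : forall x y, in_Delta N n x -> in_Delta N n y -> dist N n x e < r -> dist N n y e < r ->
      forall i h, inS N n i h -> Rabs (g_fit n f i h x - g_fit n f i h y) <= L * dist N n x y.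
Hypothesis Hneg : forall x, in_Delta N n x -> dist N n x e < r -> forall i h, inS N n i h -> h <> b i ->
      g_fit n f i h x <= - kap.
Hypothesis HM : 0 < M.
Hypothesis Hx : in_Delta N n x.
Hypothesis Hxeq : forall i h, inS N n i h -> phi n f M c x i h = 0.
Let K := Kc N n.
Let rho0 := Rmin (r / 2) (kap / (4 * L * K + 1)).
Hypothesis Hxe : dist N n x e < rho0.

Let Qf (w : pt) := sumS N n (off b (fun i h => (w i h - x i h) * (w i h - x i h))).
Let Dp (w : pt) := sumS N n (off b (fun i h => Rabs (w i h - x i h))).

Lemma K_nonneg : 0 <= K. Proof. apply Kc_nonneg. Qed.
Lemma rho0_pos : 0 < rho0.
Proof. pose proof K_nonneg. unfold rho0. apply Rmin_pos. lra. apply Rdiv_lt_0_compat; nra. Qed.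
Lemma rho0_r : rho0 <= r / 2. Proof. apply Rmin_l. Qed.
Lemma rho0_k : 4 * rho0 * L * K <= kap.
Proof. pose proof K_nonneg. pose proof (Rmin_r (r / 2) (kap / (4 * L * K + 1))). fold rho0 in H0.
  pose proof rho0_pos.
  apply Rle_trans with (4 * L * K * (kap / (4 * L * K + 1))).
  replace (4 * rho0 * L * K) with (4 * L * K * rho0) by ring. apply Rmult_le_compat_l; nra.
  replace (4 * L * K * (kap / (4 * L * K + 1))) with (kap - kap / (4 * L * K + 1)) by (field; nra).
  assert (0 < kap / (4 * L * K + 1)) by (apply Rdiv_lt_0_compat; nra). lra. Qed.

Lemma Q_nonneg w : 0 <= Qf w.
Proof. apply off_nonneg. intros; cbv beta; apply Rle_0_sqr. Qed.

Lemma dist_Dp w : in_Delta N n w -> dist N n w x <= 2 * Dp w.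
Proof. intros Hw. apply (dist_off N n e b); auto. Qed.

Lemma Dp_sq w : Dp w ^ 2 <= K * Qf w.
Proof. unfold Dp, Qf. eapply Rle_trans. apply sumS_cs. fold K. right. f_equal. apply sumS_ext.
  intros i h _. unfold off. destruct (Nat.eqb h (b i)). ring.
  replace (Rabs (w i h - x i h) ^ 2) with (Rabs (w i h - x i h) * Rabs (w i h - x i h)) by ring.
  rewrite <- Rabs_mult. apply Rabs_pos_eq. apply Rle_0_sqr. Qed.

Lemma dist_sq w : in_Delta N n w -> dist N n w x ^ 2 <= 4 * K * Qf w.
Proof. intros Hw. pose proof (dist_Dp w Hw). pose proof (Dp_sq w). pose proof (dist_nonneg N n w x).
  assert (dist N n w x ^ 2 <= (2 * Dp w) ^ 2) by (apply pow_incr; lra). nra. Qed.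

Lemma Q_le_dist w : in_Delta N n w -> Qf w <= dist N n w x ^ 2.
Proof. intros Hw. unfold Qf.
  apply Rle_trans with (sumS N n (fun i h => dist N n w x * Rabs (w i h - x i h))).
  - apply sumS_le. intros i h Hs. unfold off. destruct (Nat.eqb h (b i)).
    + pose proof (dist_nonneg N n w x). pose proof (Rabs_pos (w i h - x i h)). nra.
    + pose proof (coord_le_dist N n w x i h Hs). pose proof (Rabs_pos (w i h - x i h)).
      replace ((w i h - x i h) * (w i h - x i h)) with (Rabs (w i h - x i h) * Rabs (w i h - x i h)).
      apply Rmult_le_compat_r; auto. rewrite <- Rabs_mult. apply Rabs_pos_eq. apply Rle_0_sqr.
  - rewrite sumS_scal. right. simpl. rewrite Rmult_1_r. reflexivity. Qed.

Let rho1 := r * r / (16 * K + 16).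
Lemma rho1_pos : 0 < rho1.
Proof. pose proof K_nonneg. unfold rho1. apply Rdiv_lt_0_compat; nra. Qed.

Lemma region w : in_Delta N n w -> Qf w < rho1 -> dist N n w e < r.
Proof. intros Hw HQ. pose proof (dist_sq w Hw). pose proof K_nonneg.
  assert (dist N n w x ^ 2 < (r / 2) ^ 2).
  { apply Rle_lt_trans with (4 * K * Qf w); auto.
    apply Rle_lt_trans with (4 * K * rho1 + r * r / (16 * K + 16)).
    - pose proof (Q_nonneg w). assert (4 * K * Qf w <= 4 * K * rho1) by (apply Rmult_le_compat_l; lra).
      assert (0 < r * r / (16 * K + 16)) by (apply Rdiv_lt_0_compat; nra). lra.
    - unfold rho1. replace (4 * K * (r * r / (16 * K + 16)) + r * r / (16 * K + 16)) with ((r / 2) ^ 2 - 3 * (r * r) / (16 * K + 16)) by (field; lra).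
      assert (0 < 3 * (r * r) / (16 * K + 16)) by (apply Rdiv_lt_0_compat; nra). lra. }
  assert (dist N n w x < r / 2).
  { pose proof (dist_nonneg N n w x). apply Rnot_le_lt. intros Hc.
    assert ((r / 2) ^ 2 <= dist N n w x ^ 2) by (apply pow_incr; lra). lra. }
  pose proof (dist_tri N n w x e). pose proof rho0_r. lra. Qed.

Lemma deriv_bound w : in_Delta N n w -> dist N n w e < r ->
  sumS N n (off b (fun i h => 2 * (w i h - x i h) * phi n f M c w i h)) <= - kap * Qf w.
Proof. intros Hw Hwe.
  assert (Hxr : dist N n x e < r) by (pose proof rho0_r; lra).
  set (dwx := dist N n w x).
  assert (Hpt : forall i h, inS N n i h -> off b (fun i h => 2 * (w i h - x i h) * phi n f M c w i h) i h <=
     (- 2 * kap) * off b (fun i h => (w i h - x i h) * (w i h - x i h)) i h +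
     (2 * rho0 * L * dwx) * off b (fun i h => Rabs (w i h - x i h)) i h).
  { intros i h Hs. unfold off. destruct (Nat.eqb_spec h (b i)). lra.
    pose proof (Hneg w Hw Hwe i h Hs n0) as Hgw.
    pose proof (Hlip w x Hw Hx Hwe Hxr i h Hs) as Hl. fold dwx in Hl.
    pose proof (Hxeq i h Hs) as He0. unfold phi in *.
    destruct Hv as [_ [_ Hvv]]. pose proof (Hvv i h Hs) as Hei. destruct (Nat.eqb_spec h (b i)); [lia|].
    pose proof (coord_le_dist N n x e i h Hs) as Hxc. rewrite Hei, Rminus_0_r in Hxc.
    pose proof (Delta_coord N n x i h Hx Hs) as [Hx0 _].
    rewrite Rabs_pos_eq in Hxc by auto.
    set (a := w i h - x i h). set (gw := g_fit n f i h w) in *. set (gx := g_fit n f i h x) in *.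
    assert (Hexp : 2 * a * (w i h * gw + M * (c i h - w i h)) = 2 * a * a * (gw - M) + 2 * a * x i h * (gw - gx)).
    { unfold a. replace (M * (c i h - w i h)) with (M * (c i h - x i h) - M * (w i h - x i h)) by ring.
      replace (M * (c i h - x i h)) with (- (x i h * gx)) by lra. ring. }
    rewrite Hexp.
    assert (2 * a * a * (gw - M) <= - 2 * kap * (a * a)) by nra.
    assert (2 * a * x i h * (gw - gx) <= 2 * rho0 * L * dwx * Rabs a).
    { apply Rle_trans with (2 * Rabs a * x i h * Rabs (gw - gx)).
      - pose proof (Rle_abs (2 * a * x i h * (gw - gx))).
        rewrite !Rabs_mult in H0. rewrite (Rabs_pos_eq 2), (Rabs_pos_eq (x i h)) in H0 by lra. lra.
      - pose proof (Rabs_pos a). pose proof (Rabs_pos (gw - gx)). pose proof (dist_nonneg N n w x).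
        assert (x i h * Rabs (gw - gx) <= rho0 * (L * dwx)) by (apply Rmult_le_compat; lra).
        nra. }
    lra. }
  eapply Rle_trans. apply sumS_le. exact Hpt.
  rewrite sumS_plus, !sumS_scal. fold (Qf w). fold (Dp w).
  pose proof (dist_Dp w Hw). pose proof (Dp_sq w). pose proof rho0_k. pose proof rho0_pos.
  pose proof (Q_nonneg w). pose proof K_nonneg.
  assert (HDp : 0 <= Dp w) by (apply off_nonneg; intros; apply Rabs_pos).
  assert (2 * rho0 * L * dwx * Dp w <= 4 * rho0 * L * (Dp w ^ 2)).
  { assert (dwx * Dp w <= 2 * Dp w * Dp w) by (apply Rmult_le_compat_r; auto).
    assert (0 <= 2 * rho0 * L) by nra. simpl. nra. }
  assert (4 * rho0 * L * (Dp w ^ 2) <= 4 * rho0 * L * (K * Qf w)) by (apply Rmult_le_compat_l; nra).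
  assert (4 * rho0 * L * (K * Qf w) <= kap * Qf w).
  { replace (4 * rho0 * L * (K * Qf w)) with ((4 * rho0 * L * K) * Qf w) by ring. apply Rmult_le_compat_r; auto. }
  lra. Qed.


Lemma Q_cont w w' : in_Delta N n w -> in_Delta N n w' -> Rabs (Qf w - Qf w') <= 2 * dist N n w w'.
Proof. intros Hw Hw'. unfold Qf. rewrite <- sumS_minus. eapply Rle_trans. apply sumS_abs.
  rewrite dist_eq, <- sumS_scal. apply sumS_le. intros i h Hs. unfold off. destruct (Nat.eqb h (b i)).
  - rewrite Rminus_0_r, Rabs_R0. pose proof (Rabs_pos (w i h - w' i h)). lra.
  - pose proof (Delta_coord N n w i h Hw Hs). pose proof (Delta_coord N n w' i h Hw' Hs).
    pose proof (Delta_coord N n x i h Hx Hs).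
    replace ((w i h - x i h) * (w i h - x i h) - (w' i h - x i h) * (w' i h - x i h))
      with ((w i h - w' i h) * (w i h + w' i h - 2 * x i h)) by ring.
    rewrite Rabs_mult. rewrite Rmult_comm. apply Rmult_le_compat_r. apply Rabs_pos.
    apply Rabs_le. lra. Qed.

Lemma sol_lyap z : solution_in_Delta N n (phi n f M c) z -> Qf (z 0) < rho1 ->
  (forall t, 0 <= t -> Qf (z t) <= Qf (z 0)) /\
  (forall eta, 0 < eta -> exists T, forall t, T <= t -> Qf (z t) < eta).
Proof. intros [HzD [Hzd Hz0]] HQ0.
  apply (lyap (fun t => Qf (z t))
              (fun t => sumS N n (off b (fun i h => 2 * (z t i h - x i h) * phi n f M c (z t) i h)))
              ) with (rho := rho1) (kap := kap); auto.
  - intros t Ht. unfold Qf.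
    apply (derive_sumS N n (fun t => off b (fun i h => (z t i h - x i h) * (z t i h - x i h)))).
    intros i h Hs. unfold off. destruct (Nat.eqb h (b i)).
    + apply (derivable_pt_lim_const 0).
    + eapply dpl_eq.
      apply (derivable_pt_lim_mult (fun s => z s i h - x i h) (fun s => z s i h - x i h)).
      apply (derivable_pt_lim_minus (fun s => z s i h) (fun _ => x i h)). apply Hzd; auto. apply (derivable_pt_lim_const (x i h)).
      apply (derivable_pt_lim_minus (fun s => z s i h) (fun _ => x i h)). apply Hzd; auto. apply (derivable_pt_lim_const (x i h)).
      ring.
  - intros eps Heps. destruct (Hz0 (eps / 2) ltac:(lra)) as [d [Hd Hdd]]. exists d. split; auto.
    intros t Ht. pose proof (Q_cont (z t) (z 0) (HzD t ltac:(lra)) (HzD 0 ltac:(lra))).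
    pose proof (Hdd t Ht). lra.
  - intros t Ht. apply Q_nonneg.
  - intros t Ht HQ. apply deriv_bound. apply HzD; lra. apply region; auto. apply HzD; lra.
Qed.

Lemma stable : asympt_stable N n (phi n f M c) x.
Proof. pose proof K_nonneg as HK. pose proof rho1_pos as Hr1. split.
  - intros eps Heps. set (d := Rmin 1 (Rmin rho1 (eps / (2 * K + 2)))).
    assert (Hd : 0 < d) by (unfold d; repeat apply Rmin_pos; try lra; apply Rdiv_lt_0_compat; lra).
    assert (Hd1 : d <= 1) by apply Rmin_l.
    assert (Hd2 : d <= rho1) by (unfold d; pose proof (Rmin_r 1 (Rmin rho1 (eps / (2 * K + 2)))); pose proof (Rmin_l rho1 (eps / (2 * K + 2))); lra).
    assert (Hd3 : d <= eps / (2 * K + 2)) by (unfold d; pose proof (Rmin_r 1 (Rmin rho1 (eps / (2 * K + 2)))); pose proof (Rmin_r rho1 (eps / (2 * K + 2))); lra).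
    exists d. split; auto. intros z Hz Hz0 t Ht.
    pose proof Hz as [HzD _].
    pose proof (Q_le_dist (z 0) (HzD 0 ltac:(lra))). pose proof (dist_nonneg N n (z 0) x).
    assert (HQ0 : Qf (z 0) < d * d) by (simpl in H; nra).
    destruct (sol_lyap z Hz ltac:(nra)) as [Hmono _].
    pose proof (Hmono t Ht). pose proof (dist_sq (z t) (HzD t Ht)). pose proof (dist_nonneg N n (z t) x).
    assert (Hde : d * (2 * K + 2) <= eps).
    { apply Rmult_le_compat_r with (r := 2 * K + 2) in Hd3; [|lra].
      replace (eps / (2 * K + 2) * (2 * K + 2)) with eps in Hd3 by (field; lra). lra. }
    assert (dist N n (z t) x ^ 2 < eps ^ 2).
    { apply Rle_lt_trans with (4 * K * (d * d)).
      - assert (4 * K * Qf (z t) <= 4 * K * (d * d)) by (apply Rmult_le_compat_l; lra). lra.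
      - assert (4 * K * (d * d) < (2 * K + 2) ^ 2 * (d * d)) by nra.
        assert ((d * (2 * K + 2)) ^ 2 <= eps ^ 2) by (apply pow_incr; nra). nra. }
    apply Rnot_le_lt. intros Hc. assert (eps ^ 2 <= dist N n (z t) x ^ 2) by (apply pow_incr; lra). lra.
  - set (eta := Rmin 1 rho1). assert (Heta : 0 < eta) by (apply Rmin_pos; lra).
    exists eta. split; auto. intros z Hz Hz0 eps Heps.
    pose proof Hz as [HzD _].
    pose proof (Q_le_dist (z 0) (HzD 0 ltac:(lra))). pose proof (dist_nonneg N n (z 0) x).
    assert (eta <= 1) by apply Rmin_l. assert (eta <= rho1) by apply Rmin_r.
    destruct (sol_lyap z Hz ltac:(simpl in H; nra)) as [_ Hdec].
    destruct (Hdec (eps ^ 2 / (4 * K + 1))) as [T HT]. apply Rdiv_lt_0_compat; nra.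
    exists (Rmax T 0). intros t Ht.
    assert (HtT : T <= t) by (pose proof (Rmax_l T 0); lra). assert (Ht0 : 0 <= t) by (pose proof (Rmax_r T 0); lra).
    pose proof (HT t HtT). pose proof (dist_sq (z t) (HzD t Ht0)). pose proof (dist_nonneg N n (z t) x).
    assert (dist N n (z t) x ^ 2 < eps ^ 2).
    { apply Rle_lt_trans with (4 * K * (eps ^ 2 / (4 * K + 1))).
      - assert (4 * K * Qf (z t) <= 4 * K * (eps ^ 2 / (4 * K + 1))) by (apply Rmult_le_compat_l; lra). lra.
      - replace (4 * K * (eps ^ 2 / (4 * K + 1))) with (eps ^ 2 - eps ^ 2 / (4 * K + 1)) by (field; lra).
        assert (0 < eps ^ 2 / (4 * K + 1)) by (apply Rdiv_lt_0_compat; nra). lra. }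
    apply Rnot_le_lt. intros Hc. assert (eps ^ 2 <= dist N n (z t) x ^ 2) by (apply pow_incr; lra). lra.
Qed.
End Stab.

Lemma seq_small M0 eps : 0 <= M0 -> 0 < eps -> exists K, forall k, (K <= k)%nat -> M0 / (INR k + 1) < eps.
Proof. intros HM He. destruct (archimed_cor1 (eps / (M0 + 1))) as [K [HK HK0]].
  apply Rdiv_lt_0_compat; lra. exists K. intros k Hk.
  assert (HKk : INR K <= INR k) by (apply le_INR; auto).
  assert (0 < INR K) by (apply lt_0_INR; auto).
  apply Rle_lt_trans with ((M0 + 1) * / INR K).
  - apply Rle_trans with (M0 / INR K).
    + unfold Rdiv. apply Rmult_le_compat_l; auto. apply Rinv_le_contravar; lra.
    + unfold Rdiv. apply Rmult_le_compat_r. left; apply Rinv_0_lt_compat; lra. lra.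
  - apply Rmult_lt_compat_l with (r := M0 + 1) in HK; [|lra].
    replace ((M0 + 1) * (eps / (M0 + 1))) with eps in HK by (field; lra). auto. Qed.

Lemma min_prefix (M : nat -> R) K : (forall k, 0 < M k) -> exists m, 0 < m /\ forall k, (k < K)%nat -> m <= M k.
Proof. intros HM. induction K.
  - exists 1. split. lra. intros; lia.
  - destruct IHK as [m [Hm H]]. exists (Rmin m (M K)). split. apply Rmin_pos; auto.
    intros k Hk. destruct (Nat.eq_dec k K). subst; apply Rmin_r.
    eapply Rle_trans. apply Rmin_l. apply H; lia. Qed.

Theorem mainTheorem10 (N : nat) (n : nat -> nat) (f : nat -> nat -> pt -> R)
  (Hf : fitness_hyp N n f) (xs : pt) (Hxs : strict_nash N n f xs) :
  mutation_limit N n f (fun y => y = xs) /\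
  attracting N n f (fun y => y = xs).
Proof.
  destruct (analytic N n f xs Hf Hxs) as [b [Hv [r [kap [L [Hr [Hk [HL [Hlip Hneg]]]]]]]]].
  pose proof Hv as [He [Hb Hvv]].
  assert (Hmut : has_mut_property N n f (fun y => y = xs)).
  { intros c Hc. destruct (existence N n f xs b r kap L c Hv Hr Hk HL Hlip Hneg Hc) as [M0 [C [HM0 [HC HE]]]].
    set (Ms := fun k : nat => M0 / (INR k + 1)).
    assert (HMs : forall k, 0 < Ms k <= M0).
    { intros k. unfold Ms. pose proof (pos_INR k). split. apply Rdiv_lt_0_compat; lra.
      unfold Rdiv. rewrite <- (Rmult_1_r M0) at 2. apply Rmult_le_compat_l. lra.
      rewrite <- Rinv_1. apply Rinv_le_contravar; lra. }
    assert (Hex : forall k, exists x, in_Delta N n x /\ (forall i h, inS N n i h -> phi n f (Ms k) c x i h = 0) /\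
       dist N n x xs <= C * Ms k) by (intros k; apply HE; apply HMs).
    set (xk := fun k => proj1_sig (constructive_indefinite_description _ (Hex k))).
    assert (Hxk : forall k, in_Delta N n (xk k) /\ (forall i h, inS N n i h -> phi n f (Ms k) c (xk k) i h = 0) /\
       dist N n (xk k) xs <= C * Ms k).
    { intros k. unfold xk. destruct (constructive_indefinite_description _ (Hex k)); simpl; auto. }
    exists Ms, xk, xs. split; [|split; auto].
    - split; [|split; [|split]].
      + intros k; apply HMs.
      + intros eps Heps. destruct (seq_small M0 eps ltac:(lra) Heps) as [K HK]. exists K.
        intros k Hk0. unfold R_dist. rewrite Rminus_0_r, Rabs_pos_eq by (left; apply HMs). apply HK; lia.
      + intros k; apply Hxk.
      + intros k; apply Hxk.
    - intros eps Heps. destruct (seq_small (C * M0) eps ltac:(nra) Heps) as [K HK]. exists K.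
      intros k Hk0. destruct (Hxk k) as [_ [_ Hd]]. eapply Rle_lt_trans. apply Hd.
      specialize (HK k Hk0). unfold Ms. replace (C * (M0 / (INR k + 1))) with (C * M0 / (INR k + 1)) by (field; pose proof (pos_INR k); lra). auto. }
  split.
  - split; [exists xs; auto|]. split; [intros x ->; auto|]. split; [|split; [|split]].
    + intros [U [V [_ [_ [_ [[x1 [Hx1 HU]] [[x2 [Hx2 HV]] Hdis]]]]]]]. subst. apply (Hdis xs eq_refl); auto.
    + intros F HF Hcov. destruct (Hcov xs eq_refl) as [U [HFU HUx]]. exists (U :: nil). split.
      intros U' [<-|[]]; auto. intros x ->. exists U. simpl; auto.
    + auto.
    + intros Y HY [x0 [Hx0 HnY]] _ _ HmY. subst x0.
      set (c0 := fun i h => if Nat.ltb i N then if Nat.ltb h (n i) then / INR (n i) else 0 else 0).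
      assert (Hc0 : in_int_Delta N n c0).
      { assert (Hpos : forall i h, inS N n i h -> c0 i h = / INR (n i)).
        { intros i h [Hi Hh]. unfold c0. apply Nat.ltb_lt in Hi, Hh. rewrite Hi, Hh. auto. }
        assert (Hn : forall i, (i < N)%nat -> 0 < INR (n i)) by (intros i Hi; apply lt_0_INR; pose proof (Hb i Hi); lia).
        split; [split|].
        - intros i Hi. split; [|split].
          + intros h Hh. rewrite Hpos by (split; auto). left; apply Rinv_0_lt_compat; auto.
          + intros h Hh. unfold c0. apply Nat.ltb_lt in Hi. rewrite Hi. destruct (Nat.ltb_spec h (n i)); [lia|auto].
          + rewrite (rsum_ext _ _ (fun _ => / INR (n i))). rewrite rsum_const. field. specialize (Hn i Hi); lra.
            intros k Hk0. apply Hpos; split; auto.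
        - intros i h Hi. unfold c0. destruct (Nat.ltb_spec i N); [lia|auto].
        - intros i h Hs. rewrite Hpos by auto. apply Rinv_0_lt_compat. apply Hn. destruct Hs; auto. }
      destruct (HmY c0 Hc0) as [Ms [xk [y [_ [HYy _]]]]].
      pose proof (HY y HYy). subst y. contradiction.
  - intros c Hc Ms xk [HMpos [HMcv [HxD Hxphi]]] [y [Hy Hcv]]. subst y.
    set (rho0 := Rmin (r / 2) (kap / (4 * L * Kc N n + 1))).
    assert (Hrho0 : 0 < rho0).
    { pose proof (Kc_nonneg N n). unfold rho0. apply Rmin_pos. lra. apply Rdiv_lt_0_compat; nra. }
    destruct (Hcv rho0 Hrho0) as [K HK].
    destruct (min_prefix Ms K HMpos) as [m [Hm HmK]].
    exists m. split; auto. intros k Hkm.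
    assert (HkK : (K <= k)%nat).
    { destruct (Nat.lt_ge_cases k K); auto. specialize (HmK k H). lra. }
    apply (stable N n f xs b r kap L c (Ms k) (xk k)); auto.
Qed.
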